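(* Let $f$ be a complex-valued harmonic function on $\mathbb{C}$. If $\operatorname{int}S\neq\varnothing$, then $f(\mathbb{C})$ is either a single point or a line. In either case, $S=\mathbb{C}$ and there exists $w_0\in\mathbb{C}$ with $\mathrm{Val}(f,w_0)=\infty$.
   Context: Writing $f=u+iv$, $J_f=u_xv_y-u_yv_x$ and $S=\{z\in\mathbb{C}: J_f(z)=0\}$. $\mathrm{Val}(f,w)$ is the number (possibly infinite) of distinct $z\in\mathbb{C}$ with $f(z)=w$. *)

(* Defs.v *)
From Stdlib Require Import Reals List.
From Coquelicot Require Import Coquelicot.
Open Scope R_scope.

Definition ure (f : C -> C) (x y : R) : R := Re (f (x, y)).
Definition vim (f : C -> C) (x y : R) : R := Im (f (x, y)).

Definition px (g : R -> R -> R) (x y : R) : R := Derive (fun t => g t y) x.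
Definition py (g : R -> R -> R) (x y : R) : R := Derive (fun t => g x t) y.

Definition C1 (g : R -> R -> R) : Prop :=
  forall x y : R,
    ex_derive (fun t => g t y) x /\ ex_derive (fun t => g x t) y /\
    continuous (fun p : R * R => g (fst p) (snd p)) (x, y) /\
    continuous (fun p : R * R => px g (fst p) (snd p)) (x, y) /\
    continuous (fun p : R * R => py g (fst p) (snd p)) (x, y).

Definition C2 (g : R -> R -> R) : Prop := C1 g /\ C1 (px g) /\ C1 (py g).

Definition harmonic_R (g : R -> R -> R) : Prop :=
  C2 g /\ forall x y : R, px (px g) x y + py (py g) x y = 0.

Definition harmonic (f : C -> C) : Prop :=
  harmonic_R (ure f) /\ harmonic_R (vim f).

Definition jac (f : C -> C) (x y : R) : R :=
  px (ure f) x y * py (vim f) x y - py (ure f) x y * px (vim f) x y.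

Definition inS (f : C -> C) (z : C) : Prop := jac f (Re z) (Im z) = 0.

Definition interior_S_nonempty (f : C -> C) : Prop :=
  exists (z0 : C) (r : R), 0 < r /\
    forall z : C, Cmod (z - z0) < r -> inS f z.

Definition image_is_point (f : C -> C) : Prop :=
  exists c : C, forall z : C, f z = c.

Definition image_is_line (f : C -> C) : Prop :=
  exists a b : C, b <> 0%C /\
    forall w : C, (exists z : C, f z = w) <-> (exists t : R, w = (a + RtoC t * b)%C).

Definition Val_infinite (f : C -> C) (w : C) : Prop :=
  ~ exists l : list C, forall z : C, f z = w -> In z l.

(* Main.v *)
Require Import Defs.
From Stdlib Require Import Reals List Lra Lia Psatz FunctionalExtensionality Classical.
From Coquelicot Require Import Coquelicot.
Import Defs.
Open Scope R_scope.

Definition cont2 (F : R -> R -> R) (r t : R) : Prop :=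
  continuous (fun z : R * R => F (fst z) (snd z)) (r, t).

Lemma cont2_plus F G r t : cont2 F r t -> cont2 G r t -> cont2 (fun r t => F r t + G r t) r t.
Proof. intros H1 H2. exact (continuous_plus _ _ _ H1 H2). Qed.
Lemma cont2_mult F G r t : cont2 F r t -> cont2 G r t -> cont2 (fun r t => F r t * G r t) r t.
Proof. intros H1 H2. exact (continuous_mult _ _ _ H1 H2). Qed.
Lemma cont2_opp F r t : cont2 F r t -> cont2 (fun r t => - F r t) r t.
Proof. intros H1. exact (continuous_opp _ _ H1). Qed.
Lemma cont2_const c r t : cont2 (fun _ _ => c) r t.
Proof. exact (continuous_const c _). Qed.
Lemma cont2_fst r t : cont2 (fun r _ => r) r t.
Proof. exact (continuous_fst r t). Qed.
Lemma cont2_snd r t : cont2 (fun _ t => t) r t.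
Proof. exact (continuous_snd r t). Qed.
Lemma cont2_comp (g : R -> R -> R) p1 p2 r t :
  continuous (fun z : R * R => g (fst z) (snd z)) (p1 r t, p2 r t) ->
  cont2 p1 r t -> cont2 p2 r t -> cont2 (fun r t => g (p1 r t) (p2 r t)) r t.
Proof.
  intros Hg H1 H2. unfold cont2.
  exact (continuous_comp_2 (fun z : R * R => p1 (fst z) (snd z))
    (fun z : R * R => p2 (fst z) (snd z)) g (r, t) H1 H2 Hg).
Qed.
Lemma cont2_cos F r t : cont2 F r t -> cont2 (fun r t => cos (F r t)) r t.
Proof. intros H. exact (continuous_comp _ cos _ H (continuous_cos _)). Qed.
Lemma cont2_sin F r t : cont2 F r t -> cont2 (fun r t => sin (F r t)) r t.
Proof. intros H. exact (continuous_comp _ sin _ H (continuous_sin _)). Qed.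

Lemma cont2_t F r t : cont2 F r t -> continuous (fun t => F r t) t.
Proof.
  intros H.
  exact (continuous_comp_2 (fun _ : R => r) (fun t : R => t) F t
     (continuous_const _ _) (continuous_id _) H).
Qed.

Lemma cont2_2d F r t : cont2 F r t -> continuity_2d_pt F r t.
Proof. intros H. apply continuity_2d_pt_filterlim. exact H. Qed.

Lemma C1_ex_x g : C1 g -> forall x y, ex_derive (fun t => g t y) x.
Proof. intros H x y. destruct (H x y) as [H1 _]. exact H1. Qed.
Lemma C1_ex_y g : C1 g -> forall x y, ex_derive (fun t => g x t) y.
Proof. intros H x y. destruct (H x y) as [_ [H1 _]]. exact H1. Qed.
Lemma C1_cont g : C1 g -> forall x y, continuous (fun p : R * R => g (fst p) (snd p)) (x, y).
Proof. intros H x y. destruct (H x y) as [_ [_ [H1 _]]]. exact H1. Qed.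
Lemma C1_cont_x g : C1 g -> forall x y, continuous (fun p : R * R => px g (fst p) (snd p)) (x, y).
Proof. intros H x y. destruct (H x y) as [_ [_ [_ [H1 _]]]]. exact H1. Qed.
Lemma C1_cont_y g : C1 g -> forall x y, continuous (fun p : R * R => py g (fst p) (snd p)) (x, y).
Proof. intros H x y. destruct (H x y) as [_ [_ [_ [_ H1]]]]. exact H1. Qed.
Lemma C1_dx g : C1 g -> forall x y, is_derive (fun t => g t y) x (px g x y).
Proof. intros H x y. exact (Derive_correct _ _ (C1_ex_x g H x y)). Qed.
Lemma C1_dy g : C1 g -> forall x y, is_derive (fun t => g x t) y (py g x y).
Proof. intros H x y. exact (Derive_correct _ _ (C1_ex_y g H x y)). Qed.

Lemma C1_diff (g : R -> R -> R) : C1 g -> forall x y,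
  differentiable_pt_lim g x y (px g x y) (py g x y).
Proof.
  intros H x y.
  apply (proj1 (filterdiff_differentiable_pt_lim g x y (px g x y) (py g x y))).
  assert (H1 : forall u : R * R, is_derive (fun z : R_AbsRing => g z (snd u)) (fst u) (px g (fst u) (snd u))).
  { intros [u v]. cbn [fst snd]. exact (C1_dx g H u v). }
  exact (filterdiff_ext_lin _ _ _ (is_derive_filterdiff g x y (px g) (py g x y)
     (filter_forall _ H1) (C1_dy g H x y) (C1_cont_x g H x y))
     (fun _ => eq_refl)).
Qed.

Lemma chain (g : R -> R -> R) (p1 p2 : R -> R) x d1 d2 : C1 g ->
  is_derive p1 x d1 -> is_derive p2 x d2 ->
  is_derive (fun t => g (p1 t) (p2 t)) x
    (px g (p1 x) (p2 x) * d1 + py g (p1 x) (p2 x) * d2).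
Proof.
  intros Hg H1 H2. apply (proj2 (is_derive_Reals _ _ _)).
  apply derivable_pt_lim_comp_2d.
  - exact (C1_diff g Hg _ _).
  - exact (proj1 (is_derive_Reals _ _ _) H1).
  - exact (proj1 (is_derive_Reals _ _ _) H2).
Qed.

Lemma D_eq (f : R -> R) (x l l' : R) : is_derive f x l -> l = l' -> is_derive f x l'.
Proof. intros H <-. exact H. Qed.
Lemma D_plus (f g : R -> R) x a b : is_derive f x a -> is_derive g x b ->
  is_derive (fun t => f t + g t) x (a + b).
Proof. intros H1 H2. exact (is_derive_plus f g x a b H1 H2). Qed.
Lemma D_mult (f g : R -> R) x a b : is_derive f x a -> is_derive g x b ->
  is_derive (fun t => f t * g t) x (a * g x + f x * b).
Proof. intros H1 H2. exact (is_derive_mult f g x a b H1 H2 Rmult_comm). Qed.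
Lemma D_opp (f : R -> R) x a : is_derive f x a -> is_derive (fun t => - f t) x (- a).
Proof. intros H1. exact (is_derive_opp f x a H1). Qed.
Lemma D_const c x : is_derive (fun _ : R => c) x 0.
Proof. exact (is_derive_const c x). Qed.
Lemma D_id x : is_derive (fun t : R => t) x 1.
Proof. exact (is_derive_id x). Qed.
Lemma D_cos (f : R -> R) x a : is_derive f x a -> is_derive (fun t => cos (f t)) x (- sin (f x) * a).
Proof. intros H. eapply D_eq.
  exact (is_derive_comp cos f x (- sin (f x)) a (is_derive_cos (f x)) H). 
  change (a * - sin (f x) = - sin (f x) * a). (cbv beta; ring). Qed.
Lemma D_sin (f : R -> R) x a : is_derive f x a -> is_derive (fun t => sin (f t)) x (cos (f x) * a).
Proof. intros H. eapply D_eq.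
  exact (is_derive_comp sin f x (cos (f x)) a (is_derive_sin (f x)) H). 
  change (a * cos (f x) = cos (f x) * a). (cbv beta; ring). Qed.

Definition Wc (g : R -> R -> R) (a b ph r t : R) : R :=
  g (a + r * cos (t + ph)) (b + r * sin (t + ph)).

Lemma dWc_r g a b ph r t : C1 g ->
  is_derive (fun r => Wc g a b ph r t) r
    (Wc (px g) a b ph r t * cos (t + ph) + Wc (py g) a b ph r t * sin (t + ph)).
Proof.
  intros Hg.
  assert (H1 : is_derive (fun r => a + r * cos (t + ph)) r (cos (t + ph))).
  { eapply D_eq.
    apply D_plus. apply D_const. apply D_mult. apply D_id. apply D_const. (cbv beta; ring). }
  assert (H2 : is_derive (fun r => b + r * sin (t + ph)) r (sin (t + ph))).
  { eapply D_eq.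
    apply D_plus. apply D_const. apply D_mult. apply D_id. apply D_const. (cbv beta; ring). }
  exact (chain g _ _ r _ _ Hg H1 H2).
Qed.

Lemma dWc_t g a b ph r t : C1 g ->
  is_derive (fun t => Wc g a b ph r t) t
    (r * (- Wc (px g) a b ph r t * sin (t + ph) + Wc (py g) a b ph r t * cos (t + ph))).
Proof.
  intros Hg.
  assert (H0 : is_derive (fun t => t + ph) t 1).
  { eapply D_eq. apply D_plus. apply D_id. apply D_const. (cbv beta; ring). }
  assert (H1 : is_derive (fun t => a + r * cos (t + ph)) t (- r * sin (t + ph))).
  { eapply D_eq.
    apply D_plus. apply D_const. apply D_mult. apply D_const. apply D_cos. exact H0. (cbv beta; ring). }
  assert (H2 : is_derive (fun t => b + r * sin (t + ph)) t (r * cos (t + ph))).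
  { eapply D_eq.
    apply D_plus. apply D_const. apply D_mult. apply D_const. apply D_sin. exact H0. (cbv beta; ring). }
  eapply D_eq. exact (chain g _ _ t _ _ Hg H1 H2). unfold Wc. (cbv beta; ring).
Qed.

Lemma cWc g a b ph r t : (forall x y, continuous (fun p : R * R => g (fst p) (snd p)) (x, y)) ->
  cont2 (Wc g a b ph) r t.
Proof.
  intros Hg. unfold Wc.
  apply (cont2_comp g (fun r t => a + r * cos (t + ph)) (fun r t => b + r * sin (t + ph))).
  - apply Hg.
  - apply cont2_plus. apply cont2_const. apply cont2_mult. apply cont2_fst.
    apply cont2_cos. apply cont2_plus. apply cont2_snd. apply cont2_const.
  - apply cont2_plus. apply cont2_const. apply cont2_mult. apply cont2_fst.
    apply cont2_sin. apply cont2_plus. apply cont2_snd. apply cont2_const.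
Qed.

Definition Wr u a b ph r t :=
  Wc (px u) a b ph r t * cos (t + ph) + Wc (py u) a b ph r t * sin (t + ph).
Definition Wrr u a b ph r t :=
  cos (t + ph) * (Wc (px (px u)) a b ph r t * cos (t + ph) + Wc (py (px u)) a b ph r t * sin (t + ph))
  + sin (t + ph) * (Wc (px (py u)) a b ph r t * cos (t + ph) + Wc (py (py u)) a b ph r t * sin (t + ph)).
Definition Wt u a b ph r t :=
  r * (- Wc (px u) a b ph r t * sin (t + ph) + Wc (py u) a b ph r t * cos (t + ph)).
Definition Wtt u a b ph r t :=
  r * ( - (r * (- Wc (px (px u)) a b ph r t * sin (t + ph) + Wc (py (px u)) a b ph r t * cos (t + ph))) * sin (t + ph)
        - Wc (px u) a b ph r t * cos (t + ph)
        + (r * (- Wc (px (py u)) a b ph r t * sin (t + ph) + Wc (py (py u)) a b ph r t * cos (t + ph))) * cos (t + ph)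
        - Wc (py u) a b ph r t * sin (t + ph)).

Lemma harm_C1 u : harmonic_R u -> C1 u.
Proof. intros [[H _] _]. exact H. Qed.
Lemma harm_C1x u : harmonic_R u -> C1 (px u).
Proof. intros [[_ [H _]] _]. exact H. Qed.
Lemma harm_C1y u : harmonic_R u -> C1 (py u).
Proof. intros [[_ [_ H]] _]. exact H. Qed.
Lemma harm_lap u : harmonic_R u -> forall x y, px (px u) x y + py (py u) x y = 0.
Proof. intros [_ H]. exact H. Qed.

Lemma dW_r u a b ph r t : harmonic_R u ->
  is_derive (fun r => Wc u a b ph r t) r (Wr u a b ph r t).
Proof. intros H. exact (dWc_r u a b ph r t (harm_C1 u H)). Qed.

Lemma dWr_r u a b ph r t : harmonic_R u ->
  is_derive (fun r => Wr u a b ph r t) r (Wrr u a b ph r t).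
Proof.
  intros H. unfold Wr, Wrr.
  eapply D_eq. apply D_plus; apply D_mult.
  apply (dWc_r _ a b ph r t (harm_C1x u H)). apply D_const.
  apply (dWc_r _ a b ph r t (harm_C1y u H)). apply D_const.
  (cbv beta; ring).
Qed.

Lemma dW_t u a b ph r t : harmonic_R u ->
  is_derive (fun t => Wc u a b ph r t) t (Wt u a b ph r t).
Proof. intros H. exact (dWc_t u a b ph r t (harm_C1 u H)). Qed.

Lemma dWt_t u a b ph r t : harmonic_R u ->
  is_derive (fun t => Wt u a b ph r t) t (Wtt u a b ph r t).
Proof.
  intros H. unfold Wt, Wtt.
  assert (H0 : is_derive (fun t => t + ph) t 1).
  { eapply D_eq. apply D_plus. apply D_id. apply D_const. (cbv beta; ring). }
  eapply D_eq. apply D_mult. apply D_const. apply D_plus; apply D_mult.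
  apply D_opp. apply (dWc_t _ a b ph r t (harm_C1x u H)). apply D_sin. exact H0.
  apply (dWc_t _ a b ph r t (harm_C1y u H)). apply D_cos. exact H0.
  (cbv beta; ring).
Qed.

Lemma pointwise_id u a b ph r t : harmonic_R u ->
  r ^ 2 * Wrr u a b ph r t + r * Wr u a b ph r t + Wtt u a b ph r t = 0.
Proof.
  intros H. unfold Wrr, Wr, Wtt.
  assert (HL : Wc (px (px u)) a b ph r t + Wc (py (py u)) a b ph r t = 0)
    by exact (harm_lap u H (a + r * cos (t + ph)) (b + r * sin (t + ph))).
  match goal with |- ?L = 0 => replace L with
   (r ^ 2 * (Wc (px (px u)) a b ph r t + Wc (py (py u)) a b ph r t) * (cos (t + ph) ^ 2 + sin (t + ph) ^ 2)) by ring end.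
  rewrite HL. ring.
Qed.

Lemma cont2_minus F G r t : cont2 F r t -> cont2 G r t -> cont2 (fun r t => F r t - G r t) r t.
Proof. intros H1 H2. exact (continuous_minus _ _ _ H1 H2). Qed.

Lemma cont2_pow F n r t : cont2 F r t -> cont2 (fun r t => F r t ^ n) r t.
Proof.
  intros H. induction n as [|n IH].
  - exact (cont2_const 1 r t).
  - exact (cont2_mult F (fun r t => F r t ^ n) r t H IH).
Qed.

Ltac c2step := match goal with
 | |- cont2 (fun r t => @?F r t ^ ?n) _ _ => apply (cont2_pow F n)
 | |- cont2 (fun r t => @?F r t + @?G r t) _ _ => apply (cont2_plus F G)
 | |- cont2 (fun r t => @?F r t - @?G r t) _ _ => apply (cont2_minus F G)
 | |- cont2 (fun r t => @?F r t * @?G r t) _ _ => apply (cont2_mult F G)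
 | |- cont2 (fun r t => - @?F r t) _ _ => apply (cont2_opp F)
 | |- cont2 (fun r t => cos (@?F r t)) _ _ => apply (cont2_cos F)
 | |- cont2 (fun r t => sin (@?F r t)) _ _ => apply (cont2_sin F)
 | |- cont2 (fun r t => r) _ _ => apply cont2_fst
 | |- cont2 (fun r t => t) _ _ => apply cont2_snd
 | |- cont2 (fun r t => Wc ?g ?a ?b ?ph r t) _ _ => apply cWc; assumption
 | |- cont2 (Wc ?g ?a ?b ?ph) _ _ => apply cWc; assumption
 | |- cont2 (fun r t => ?c) _ _ => apply (cont2_const c)
 end.
Ltac c2go := repeat c2step.

Ltac c2prep H :=
  let u := match type of H with harmonic_R ?u => u end in
  pose proof (C1_cont _ (harm_C1 u H));
  pose proof (C1_cont_x _ (harm_C1 u H));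
  pose proof (C1_cont_y _ (harm_C1 u H));
  pose proof (C1_cont_x _ (harm_C1x u H));
  pose proof (C1_cont_y _ (harm_C1x u H));
  pose proof (C1_cont_x _ (harm_C1y u H));
  pose proof (C1_cont_y _ (harm_C1y u H)).

Lemma exR (F : R -> R -> R) r a b : (forall t, cont2 F r t) -> ex_RInt (fun t => F r t) a b.
Proof. intros H. apply (ex_RInt_continuous (V := R_CompleteNormedModule)). intros z _. exact (cont2_t F r z (H z)). Qed.

Lemma RI_plus (f g : R -> R) a b : ex_RInt f a b -> ex_RInt g a b ->
  RInt (fun x => f x + g x) a b = RInt f a b + RInt g a b.
Proof. intros H1 H2. exact (RInt_plus f g a b H1 H2). Qed.
Lemma RI_scal (f : R -> R) a b c : ex_RInt f a b ->
  RInt (fun x => c * f x) a b = c * RInt f a b.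
Proof. intros H1. exact (RInt_scal f a b c H1). Qed.
Lemma RI_ext (f g : R -> R) a b : (forall x, f x = g x) -> RInt f a b = RInt g a b.
Proof. intros H. apply RInt_ext. intros x _. exact (H x). Qed.
Lemma RI_opp (f : R -> R) a b : ex_RInt f a b ->
  RInt (fun x => - f x) a b = - RInt f a b.
Proof. intros H1. exact (RInt_opp f a b H1). Qed.

Lemma deriv_int (F dF : R -> R -> R) a b r :
  (forall r t, is_derive (fun r => F r t) r (dF r t)) ->
  (forall r t, cont2 F r t) -> (forall r t, cont2 dF r t) ->
  is_derive (fun r => RInt (fun t => F r t) a b) r (RInt (fun t => dF r t) a b).
Proof.
  intros Hd HF HdF.
  assert (HD : forall r t, Derive (fun z => F z t) r = dF r t).
  { intros r0 t. exact (is_derive_unique _ _ _ (Hd r0 t)). }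
  assert (E : RInt (fun t => Derive (fun u => F u t) r) a b = RInt (fun t => dF r t) a b).
  { apply RInt_ext. intros x _. apply HD. }
  rewrite <- E.
  apply (is_derive_RInt_param F a b r).
  - apply filter_forall. intros r0 t _. exists (dF r0 t). apply Hd.
  - intros t _. apply (continuity_2d_pt_ext dF). intros; symmetry; apply HD.
    apply cont2_2d. apply HdF.
  - apply filter_forall. intros r0. apply exR. intros; apply HF.
Qed.

Definition Ac u a b ph k r : R := RInt (fun t => Wc u a b ph r t * cos (INR k * t)) 0 (2 * PI).
Definition Dc u a b ph k r : R := RInt (fun t => Wr u a b ph r t * cos (INR k * t)) 0 (2 * PI).
Definition Ec u a b ph k r : R := RInt (fun t => Wrr u a b ph r t * cos (INR k * t)) 0 (2 * PI).

Lemma dA u a b ph k r : harmonic_R u -> is_derive (Ac u a b ph k) r (Dc u a b ph k r).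
Proof.
  intros H. unfold Ac, Dc. c2prep H.
  apply (deriv_int (fun r t => Wc u a b ph r t * cos (INR k * t))
                   (fun r t => Wr u a b ph r t * cos (INR k * t))).
  - intros r0 t. eapply D_eq. apply D_mult. apply dW_r; exact H. apply D_const. cbv beta; ring.
  - intros; c2go.
  - intros; unfold Wr; c2go.
Qed.

Lemma dD u a b ph k r : harmonic_R u -> is_derive (Dc u a b ph k) r (Ec u a b ph k r).
Proof.
  intros H. unfold Ec, Dc. c2prep H.
  apply (deriv_int (fun r t => Wr u a b ph r t * cos (INR k * t))
                   (fun r t => Wrr u a b ph r t * cos (INR k * t))).
  - intros r0 t. eapply D_eq. apply D_mult. apply dWr_r; exact H. apply D_const. cbv beta; ring.
  - intros; unfold Wr; c2go.
  - intros; unfold Wrr; c2go.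
Qed.

Ltac exr r := pattern r;
  match goal with |- (fun r0 => ex_RInt (fun t => @?B r0 t) _ _) r =>
    apply (exR B r); intros; c2go end.

Lemma cos_2pi_ph ph : cos (2 * PI + ph) = cos ph.
Proof. replace (2 * PI + ph) with (ph + 2 * INR 1 * PI) by (simpl; ring). apply cos_period. Qed.
Lemma sin_2pi_ph ph : sin (2 * PI + ph) = sin ph.
Proof. replace (2 * PI + ph) with (ph + 2 * INR 1 * PI) by (simpl; ring). apply sin_period. Qed.
Lemma cos_k2pi k : cos (INR k * (2 * PI)) = 1.
Proof. replace (INR k * (2 * PI)) with (0 + 2 * INR k * PI) by ring. rewrite cos_period. apply cos_0. Qed.
Lemma sin_k2pi k : sin (INR k * (2 * PI)) = 0.
Proof. replace (INR k * (2 * PI)) with (0 + 2 * INR k * PI) by ring. rewrite sin_period. apply sin_0. Qed.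

Lemma Wc_per g a b ph r : Wc g a b ph r (2 * PI) = Wc g a b ph r 0.
Proof. unfold Wc. rewrite cos_2pi_ph, sin_2pi_ph. rewrite !Rplus_0_l. reflexivity. Qed.

Lemma Wt_per u a b ph r : Wt u a b ph r (2 * PI) = Wt u a b ph r 0.
Proof. unfold Wt. rewrite !Wc_per, cos_2pi_ph, sin_2pi_ph, !Rplus_0_l. reflexivity. Qed.

Lemma ibp u a b ph k r : harmonic_R u ->
  RInt (fun t => Wtt u a b ph r t * cos (INR k * t) + INR k ^ 2 * (Wc u a b ph r t * cos (INR k * t))) 0 (2 * PI) = 0.
Proof.
  intros H. c2prep H. apply is_RInt_unique.
  set (F := fun t => Wt u a b ph r t * cos (INR k * t) + INR k * (Wc u a b ph r t * sin (INR k * t))).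
  assert (HK : forall x, is_derive (fun t => INR k * t) x (INR k)).
  { intros x. eapply D_eq. apply D_mult. apply D_const. apply D_id. cbv beta; ring. }
  assert (HI := is_RInt_derive F
     (fun t => Wtt u a b ph r t * cos (INR k * t) + INR k ^ 2 * (Wc u a b ph r t * cos (INR k * t))) 0 (2 * PI)).
  assert (E : F (2 * PI) - F 0 = 0).
  { unfold F. rewrite Wt_per, Wc_per, cos_k2pi, sin_k2pi. rewrite !Rmult_0_r, cos_0, sin_0.
    ring. }
  assert (HI' : is_RInt
     (fun t => Wtt u a b ph r t * cos (INR k * t) + INR k ^ 2 * (Wc u a b ph r t * cos (INR k * t))) 0 (2 * PI)
     (F (2 * PI) - F 0)).
  2: { rewrite E in HI'. exact HI'. }
  apply HI.
  - intros x _. unfold F. eapply D_eq. apply D_plus. apply D_mult. apply dWt_t; exact H.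
    apply D_cos. apply HK. apply D_mult. apply D_const. apply D_mult. apply dW_t; exact H.
    apply D_sin. apply HK.
    cbv beta. unfold Wt. ring.
  - intros x _. apply (cont2_t (fun r t => Wtt u a b ph r t * cos (INR k * t) + INR k ^ 2 * (Wc u a b ph r t * cos (INR k * t)))).
    unfold Wtt. c2go.
Qed.

Lemma ode u a b ph k r : harmonic_R u ->
  r ^ 2 * Ec u a b ph k r + r * Dc u a b ph k r = INR k ^ 2 * Ac u a b ph k r.
Proof.
  intros H. c2prep H. unfold Ec, Dc, Ac.
  rewrite <- (RI_scal (fun t => Wrr u a b ph r t * cos (INR k * t))) by (exr r; unfold Wrr; c2go).
  rewrite <- (RI_scal (fun t => Wr u a b ph r t * cos (INR k * t))) by (exr r; unfold Wr; c2go).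
  rewrite <- RI_plus.
  2: { exr r; unfold Wrr; c2go. }
  2: { exr r; unfold Wr; c2go. }
  rewrite <- (RI_scal (fun t => Wc u a b ph r t * cos (INR k * t))) by (exr r).
  transitivity (RInt (fun t => - (Wtt u a b ph r t * cos (INR k * t) + INR k ^ 2 * (Wc u a b ph r t * cos (INR k * t)))
        + INR k ^ 2 * (Wc u a b ph r t * cos (INR k * t))) 0 (2 * PI)).
  - apply RI_ext. intros t.
    assert (P := pointwise_id u a b ph r t H).
    replace (Wtt u a b ph r t) with (- (r ^ 2 * Wrr u a b ph r t + r * Wr u a b ph r t)) by lra.
    ring.
  - rewrite RI_plus. rewrite RI_opp. rewrite ibp by exact H. ring.
    + exr r. unfold Wtt; c2go.
    + exr r. unfold Wtt; c2go.
    + exr r.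
Qed.

Lemma D_cont (f : R -> R) x l : is_derive f x l -> continuity_pt f x.
Proof.
  intros H. apply (proj2 (continuity_pt_filterlim f x)).
  exact (ex_derive_continuous f x (ex_intro _ l H)).
Qed.

Lemma zero_deriv_pos (Z dZ : R -> R) :
  (forall r, is_derive Z r (dZ r)) -> (forall r, 0 < r -> dZ r = 0) ->
  forall r, 0 < r -> Z r = Z 0.
Proof.
  intros Hd H0 r Hr.
  destruct (MVT_gen Z 0 r (fun _ => 0)) as [c [_ Hc]].
  - intros x Hx. rewrite Rmin_left in Hx by lra. rewrite <- (H0 x) by lra. apply Hd.
  - intros x _. exact (D_cont Z x _ (Hd x)).
  - lra.
Qed.

Lemma zero_deriv_pos1 (Q : R -> R) :
  (forall x, 0 < x -> is_derive Q x 0) -> forall r, 0 < r -> Q r = Q 1.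
Proof.
  intros Hd r Hr.
  destruct (MVT_gen Q 1 r (fun _ => 0)) as [c [_ Hc]].
  - intros x Hx. apply Hd. assert (0 < Rmin 1 r) by (apply Rmin_glb_lt; lra). lra.
  - intros x Hx. assert (0 < Rmin 1 r) by (apply Rmin_glb_lt; lra).
    exact (D_cont Q x _ (Hd x ltac:(lra))).
  - lra.
Qed.

Lemma D_powx k x : is_derive (fun r => r ^ k) x (INR k * x ^ pred k).
Proof. eapply D_eq. exact (is_derive_pow (fun r => r) k x 1 (D_id x)). cbv beta; ring. Qed.

Lemma KA_rD u a b ph k (H : harmonic_R u) :
  forall r, 0 < r -> INR k * Ac u a b ph k r = r * Dc u a b ph k r.
Proof.
  set (A := Ac u a b ph k). set (D := Dc u a b ph k). set (E := Ec u a b ph k).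
  set (K := INR k).
  set (Z := fun r => K * r ^ k * A r - r ^ (S k) * D r).
  set (dZ := fun r => K * (K * r ^ pred k * A r + r ^ k * D r) - (INR (S k) * r ^ k * D r + r ^ (S k) * E r)).
  assert (Hd : forall r, is_derive Z r (dZ r)).
  { intros r. unfold Z, dZ. eapply D_eq.
    apply (is_derive_minus (fun r => K * r ^ k * A r) (fun r => r ^ S k * D r)).
    apply D_mult. apply D_mult. apply D_const. apply D_powx. apply dA; exact H.
    apply D_mult. apply D_powx. apply dD; exact H.
    change (minus ?x ?y) with (x - y). change (Init.Nat.pred (S k)) with k. unfold A, D, E, K. cbv beta. ring. }
  assert (H0 : forall r, 0 < r -> dZ r = 0).
  { intros r Hr. assert (Ho := ode u a b ph k r H). fold A D E K in Ho.
    assert (E1 : r * dZ r = r ^ k * (K ^ 2 * A r - r * D r - r ^ 2 * E r)).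
    { unfold dZ. rewrite S_INR. fold K. destruct k as [|k'].
      - unfold K; simpl. ring.
      - simpl pred. simpl pow. ring. }
    rewrite <- Ho in E1. 
    assert (Hz : r * dZ r = 0) by (rewrite E1; ring).
    destruct (Rmult_integral _ _ Hz); [lra | assumption]. }
  intros r Hr.
  assert (HZ := zero_deriv_pos Z dZ Hd H0 r Hr).
  assert (Z0 : Z 0 = 0).
  { unfold Z. destruct k as [|k'].
    - unfold K; simpl. ring.
    - rewrite !pow_i by lia. ring. }
  rewrite Z0 in HZ. unfold Z in HZ.
  assert (Hk : 0 < r ^ k) by (apply pow_lt; lra).
  simpl pow in HZ.
  apply (Rmult_eq_reg_l (r ^ k)); [| lra]. 
  lra.
Qed.

Lemma coef u a b ph k (H : harmonic_R u) :
  forall r, 0 < r -> Ac u a b ph k r = Ac u a b ph k 1 * r ^ k.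
Proof.
  set (Q := fun r => Ac u a b ph k r / r ^ k).
  assert (HQ : forall x, 0 < x -> is_derive Q x 0).
  { intros x Hx. unfold Q. eapply D_eq.
    apply is_derive_div. apply dA; exact H. apply D_powx.
    apply pow_nonzero; lra.
    assert (HK := KA_rD u a b ph k H x Hx).
    assert (E : Dc u a b ph k x * x ^ k - Ac u a b ph k x * (INR k * x ^ pred k) = 0).
    { destruct k as [|k'].
      - change (INR 0) with 0 in *. simpl pow.
        assert (Hz : x * Dc u a b ph 0 x = 0) by lra.
        destruct (Rmult_integral _ _ Hz) as [Hz'|Hz']; [lra|]. rewrite Hz'. ring.
      - simpl pred. apply (Rmult_eq_reg_l x); [|lra].
        replace (x * (Dc u a b ph (S k') x * x ^ S k' - Ac u a b ph (S k') x * (INR (S k') * x ^ k')))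
          with (x ^ S k' * (x * Dc u a b ph (S k') x) - x ^ S k' * (INR (S k') * Ac u a b ph (S k') x))
          by (simpl; ring).
        rewrite HK. ring. }
    cbv beta. rewrite E. unfold Rdiv. ring. }
  intros r Hr.
  assert (E := zero_deriv_pos1 Q HQ r Hr). unfold Q in E.
  rewrite pow1 in E. 
  assert (Hk : 0 < r ^ k) by (apply pow_lt; lra).
  assert (E2 : Ac u a b ph k r = (Ac u a b ph k r / r ^ k) * r ^ k) by (field; lra).
  rewrite E2, E. field.
Qed.

Lemma coef0 u a b ph (H : harmonic_R u) :
  forall r, 0 < r -> Ac u a b ph 0 r = 2 * PI * u a b.
Proof.
  intros r Hr.
  assert (HD : forall x, 0 < x -> Dc u a b ph 0 x = 0).
  { intros x Hx. assert (HK := KA_rD u a b ph 0 H x Hx). simpl in HK.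
    assert (x * Dc u a b ph 0 x = 0) by lra.
    destruct (Rmult_integral _ _ H0); [lra|assumption]. }
  rewrite (zero_deriv_pos (Ac u a b ph 0) (Dc u a b ph 0) (fun x => dA u a b ph 0 x H) HD r Hr).
  unfold Ac. rewrite (RI_ext _ (fun _ => u a b)).
  - rewrite RInt_const. change (scal ?x ?y) with (x * y). ring.
  - intros t. unfold Wc. simpl INR. rewrite !Rmult_0_l, !Rplus_0_r, cos_0. ring.
Qed.

Lemma loc_R (P : R -> Prop) x : locally x P -> exists d, 0 < d /\ forall y, Rabs (y - x) < d -> P y.
Proof. intros [e He]. exists e. split. apply cond_pos. intros y Hy. apply He. exact Hy. Qed.

Definition hk (s : R) : R := (1 - cos s) / 2.

Lemma c1_mult (f g : R -> R) x : continuous f x -> continuous g x -> continuous (fun s => f s * g s) x.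
Proof. intros H1 H2. exact (continuous_mult f g x H1 H2). Qed.
Lemma c1_cosl c x : continuous (fun s => cos (c * s)) x.
Proof. apply (continuous_comp (fun s => c * s) cos). apply (c1_mult (fun _ => c) (fun s => s)).
  apply continuous_const. apply continuous_id. apply continuous_cos. Qed.
Lemma c1_hk x : continuous hk x.
Proof. unfold hk. apply (c1_mult (fun s => 1 - cos s) (fun _ => / 2)).
  exact (continuous_minus (fun _ => 1) cos x (continuous_const _ _) (continuous_cos x)).
  apply continuous_const. Qed.
Lemma c1_pow (f : R -> R) n x : continuous f x -> continuous (fun s => f s ^ n) x.
Proof. intros H. induction n as [|n IH]. exact (continuous_const 1 x).
  exact (c1_mult f (fun s => f s ^ n) x H IH). Qed.

Lemma prod_cos m s : cos s * cos (INR m * s) =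
  (cos (INR (S m) * s) + cos (INR (match m with 0%nat => 1%nat | S p => p end) * s)) / 2.
Proof.
  destruct m as [|p].
  - simpl. rewrite Rmult_0_l, Rmult_1_l, cos_0. field.
  - replace (INR (S (S p)) * s) with (INR (S p) * s + s) by (rewrite (S_INR (S p)); ring).
    replace (INR p * s) with (INR (S p) * s - s) by (rewrite (S_INR p); ring).
    rewrite cos_plus, cos_minus. field.
Qed.

Lemma kernel_orth (g : R -> R) :
  (forall s, 0 <= s <= 2 * PI -> continuous g s) ->
  (forall m : nat, RInt (fun s => g s * cos (INR m * s)) 0 (2 * PI) = 0 :> R) ->
  forall n m, RInt (fun s => g s * hk s ^ n * cos (INR m * s)) 0 (2 * PI) = 0 :> R.
Proof.
  intros Hg Hm.
  assert (Hex : forall n m, ex_RInt (fun s => g s * hk s ^ n * cos (INR m * s)) 0 (2 * PI)).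
  { intros n m. apply (ex_RInt_continuous (V := R_CompleteNormedModule)). intros z Hz.
    rewrite Rmin_left, Rmax_right in Hz by (pose proof PI_RGT_0; lra).
    apply (c1_mult (fun s => g s * hk s ^ n)). apply (c1_mult g). apply Hg; exact Hz.
    apply c1_pow. apply c1_hk. apply c1_cosl. }
  induction n as [|n IH]; intros m.
  - transitivity (RInt (fun s => g s * cos (INR m * s)) 0 (2 * PI)); [| apply Hm]. apply RI_ext. intros s. simpl. ring.
  - set (m' := match m with 0%nat => 1%nat | S p => p end).
    rewrite (RI_ext _ (fun s => (/ 2) * (g s * hk s ^ n * cos (INR m * s)) +
        ((- / 4) * (g s * hk s ^ n * cos (INR (S m) * s)) +
         (- / 4) * (g s * hk s ^ n * cos (INR m' * s))))).
    + rewrite RI_plus, RI_plus, !RI_scal, !IH. ring.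
      all: repeat match goal with
        | |- ex_RInt (fun s => ?gg s * hk s ^ ?n * cos (INR ?m * s)) _ _ => exact (Hex n m)
        | |- ex_RInt (fun s => ?c * @?F s) _ _ => apply (ex_RInt_scal (V := R_CompleteNormedModule) F)
        | |- ex_RInt (fun s => @?F s + @?G s) _ _ => apply (ex_RInt_plus (V := R_CompleteNormedModule) F G)
        end.
    + intros s. assert (P := prod_cos m s). fold m' in P. unfold hk in *. simpl pow.
      replace (cos (INR (S m) * s)) with (2 * (cos s * cos (INR m * s)) - cos (INR m' * s)) by lra.
      field.
Qed.

Lemma RInt_ge_const (f : R -> R) a b c : a <= b -> ex_RInt f a b ->
  (forall x, a < x < b -> c <= f x) -> (b - a) * c <= RInt f a b.
Proof.
  intros Hab Hex H.
  assert (E : RInt (fun _ => c) a b = (b - a) * c :> R).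
  { rewrite RInt_const. reflexivity. }
  rewrite <- E. apply RInt_le; auto.
  apply (ex_RInt_const (V := R_CompleteNormedModule)).
Qed.

Lemma cos_decr_le x y : 0 <= x -> x <= y -> y <= PI -> cos y <= cos x.
Proof.
  intros H1 H2 H3. destruct (Req_dec x y) as [->|Hne]. lra.
  left. apply cos_decreasing_1; lra.
Qed.

Lemma cos_PI_minus d : cos (PI - d) = - cos d.
Proof. rewrite cos_minus, cos_PI, sin_PI. ring. Qed.

Lemma cos_2PI_minus s : cos (2 * PI - s) = cos s.
Proof. rewrite cos_minus, cos_2PI, sin_2PI. ring. Qed.

Lemma hk_le_q s d : 0 <= s <= 2 * PI -> 0 <= d <= PI -> d <= Rabs (s - PI) -> hk s <= (1 + cos d) / 2.
Proof.
  intros Hs Hd Ha. unfold hk.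
  assert (cos (PI - d) <= cos s).
  { destruct (Rle_dec s PI).
    - rewrite Rabs_left1 in Ha by lra. apply cos_decr_le; lra.
    - rewrite Rabs_right in Ha by lra. rewrite <- (cos_2PI_minus s). apply cos_decr_le; lra. }
  rewrite cos_PI_minus in H. lra.
Qed.

Lemma hk_ge_q s d : 0 <= d <= PI -> Rabs (s - PI) <= d -> (1 + cos d) / 2 <= hk s.
Proof.
  intros Hd Ha. unfold hk.
  assert (cos s <= cos (PI - d)).
  { destruct (Rle_dec s PI).
    - rewrite Rabs_left1 in Ha by lra. apply cos_decr_le; lra.
    - rewrite Rabs_right in Ha by lra. rewrite <- (cos_2PI_minus s). apply cos_decr_le; lra. }
  rewrite cos_PI_minus in H. lra.
Qed.

Lemma hk_ge0 s : 0 <= hk s.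
Proof. unfold hk. pose proof (COS_bound s). lra. Qed.

Lemma kernel_pos (g : R -> R) :
  (forall s, 0 <= s <= 2 * PI -> continuous g s) -> 0 < g PI ->
  (forall n, RInt (fun s => g s * hk s ^ n) 0 (2 * PI) = 0 :> R) -> False.
Proof.
  intros Hg Hpos Hn.
  assert (HPI := PI2_1).
  set (eps := g PI / 2).
  assert (Heps : 0 < eps) by (unfold eps; lra).
  assert (Hc : continuity_pt g PI).
  { apply (proj2 (continuity_pt_filterlim g PI)). apply Hg. lra. }
  destruct (loc_R _ _ (proj1 (continuity_pt_locally g PI) Hc (mkposreal eps Heps))) as [d0 [Hd0 Hd0']].
  cbn [pos] in Hd0'.
  set (d := Rmin (d0 / 2) 1).
  assert (Hd : 0 < d /\ d <= 1 /\ d < d0).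
  { unfold d. split; [apply Rmin_glb_lt; lra|]. split; [apply Rmin_r|].
    apply (Rle_lt_trans _ (d0/2)); [apply Rmin_l | lra]. }
  destruct (continuity_ab_maj (fun s => Rabs (g s)) 0 (2 * PI)) as [Mx [HM HMx]].
  { lra. }
  { intros c Hcc. apply (proj2 (continuity_pt_filterlim _ c)).
    apply (continuous_Rabs_comp g). apply Hg; exact Hcc. }
  set (M := Rabs (g Mx)).
  assert (HM0 : 0 <= M) by apply Rabs_pos.
  set (q := (1 + cos d) / 2). set (q2 := (1 + cos (d / 2)) / 2).
  assert (Hcd : 0 < cos d) by (apply cos_gt_0; lra).
  assert (Hcd2 : cos d < cos (d / 2)) by (apply cos_decreasing_1; lra).
  assert (Hq : 0 < q) by (unfold q; lra).
  assert (Hqq : q < q2) by (unfold q, q2; lra).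
  assert (P1 : forall n s, 0 <= s <= 2 * PI -> - (M * q ^ n) <= g s * hk s ^ n).
  { intros n s Hs.
    assert (Hh0 : 0 <= hk s ^ n) by (apply pow_le; apply hk_ge0).
    assert (Hq0 : 0 <= q ^ n) by (apply pow_le; lra).
    destruct (Rlt_dec (Rabs (s - PI)) d0) as [Hl|Hl].
    - assert (Hgs := Hd0' s Hl). apply Rabs_def2 in Hgs.
      assert (0 <= g s) by (unfold eps in *; lra).
      assert (0 <= g s * hk s ^ n) by (apply Rmult_le_pos; lra).
      assert (0 <= M * q ^ n) by (apply Rmult_le_pos; lra). lra.
    - assert (Hh : hk s <= q) by (apply hk_le_q; lra).
      assert (Hhn : hk s ^ n <= q ^ n) by (apply pow_incr; split; [apply hk_ge0|exact Hh]).
      assert (Hgs : Rabs (g s) <= M) by (apply HM; exact Hs).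
      assert (Rabs (g s * hk s ^ n) <= M * q ^ n).
      { rewrite Rabs_mult, (Rabs_right (hk s ^ n)) by lra.
        apply Rmult_le_compat; try lra. apply Rabs_pos. }
      apply Rabs_le_between in H. lra. }
  assert (P2 : forall n s, Rabs (s - PI) <= d / 2 -> eps * q2 ^ n <= g s * hk s ^ n).
  { intros n s Hs.
    assert (Hl : Rabs (s - PI) < d0) by lra.
    assert (Hgs := Hd0' s Hl). apply Rabs_def2 in Hgs.
    assert (Hh : q2 <= hk s) by (apply hk_ge_q; lra).
    assert (Hq2 : 0 <= q2) by lra.
    assert (Hhn : q2 ^ n <= hk s ^ n) by (apply pow_incr; lra).
    apply Rmult_le_compat; try lra. apply pow_le; lra. unfold eps in *; lra. }
  assert (Hex : forall a b, 0 <= a -> a <= b -> b <= 2 * PI -> forall n, ex_RInt (fun s => g s * hk s ^ n) a b).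
  { intros a b Ha Hab Hb n. apply (ex_RInt_continuous (V := R_CompleteNormedModule)). intros z Hz.
    rewrite Rmin_left, Rmax_right in Hz by lra.
    apply (c1_mult g (fun s => hk s ^ n)). apply Hg; lra. apply c1_pow. apply c1_hk. }
  assert (Bound : forall n, d * eps * q2 ^ n <= 2 * PI * M * q ^ n).
  { intros n.
    set (a1 := PI - d / 2). set (a2 := PI + d / 2).
    assert (E : RInt (fun s => g s * hk s ^ n) 0 (2 * PI) =
       RInt (fun s => g s * hk s ^ n) 0 a1 + RInt (fun s => g s * hk s ^ n) a1 a2 + RInt (fun s => g s * hk s ^ n) a2 (2 * PI) :> R).
    { rewrite <- (RInt_Chasles _ 0 a2 (2 * PI)). rewrite <- (RInt_Chasles _ 0 a1 a2). reflexivity.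
      all: apply Hex; unfold a1, a2; lra. }
    rewrite Hn in E.
    assert (I1 : (a1 - 0) * (- (M * q ^ n)) <= RInt (fun s => g s * hk s ^ n) 0 a1).
    { apply RInt_ge_const. unfold a1; lra. apply Hex; unfold a1; lra. intros x Hx. apply P1. unfold a1 in *; lra. }
    assert (I2 : (a2 - a1) * (eps * q2 ^ n) <= RInt (fun s => g s * hk s ^ n) a1 a2).
    { apply RInt_ge_const. unfold a1, a2; lra. apply Hex; unfold a1, a2; lra. intros x Hx. apply P2.
      unfold a1, a2 in *. apply Rabs_le; lra. }
    assert (I3 : (2 * PI - a2) * (- (M * q ^ n)) <= RInt (fun s => g s * hk s ^ n) a2 (2 * PI)).
    { apply RInt_ge_const. unfold a2; lra. apply Hex; unfold a2; lra. intros x Hx. apply P1. unfold a2 in *; lra. }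
    assert (0 <= M * q ^ n) by (apply Rmult_le_pos; [lra| apply pow_le; lra]).
    unfold a1, a2 in *. nra. }
  set (rho := q / q2).
  assert (Hrho : 0 <= rho < 1).
  { unfold rho. split. apply Rmult_le_pos; [lra| left; apply Rinv_0_lt_compat; lra].
    apply (Rmult_lt_reg_r q2); [lra|]. unfold Rdiv. rewrite Rmult_assoc, Rinv_l by lra. lra. }
  assert (Hy : 0 < d * eps / (2 * PI * M + 1)).
  { apply Rdiv_lt_0_compat. apply Rmult_lt_0_compat; lra. nra. }
  destruct (pow_lt_1_zero rho ltac:(rewrite Rabs_right; lra) _ Hy) as [N HN].
  specialize (HN N (Nat.le_refl N)).
  rewrite Rabs_right in HN by (apply Rle_ge, pow_le; lra).
  assert (Eq : q ^ N = rho ^ N * q2 ^ N).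
  { rewrite <- Rpow_mult_distr. unfold rho. f_equal. field. lra. }
  assert (B := Bound N). rewrite Eq in B.
  assert (Hq2N : 0 < q2 ^ N) by (apply pow_lt; lra).
  assert (B2 : d * eps <= 2 * PI * M * rho ^ N).
  { apply (Rmult_le_reg_r (q2 ^ N)); [exact Hq2N|]. nra. }
  assert (Hr0 : 0 <= rho ^ N) by (apply pow_le; lra).
  assert (B3 : rho ^ N * (2 * PI * M + 1) < d * eps).
  { apply (Rmult_lt_reg_r (/ (2 * PI * M + 1))). apply Rinv_0_lt_compat; nra.
    rewrite Rmult_assoc, Rinv_r by nra. rewrite Rmult_1_r. exact HN. }
  nra.
Qed.

Lemma circle_zero (g : R -> R) :
  (forall s, 0 <= s <= 2 * PI -> continuous g s) ->
  (forall m : nat, RInt (fun s => g s * cos (INR m * s)) 0 (2 * PI) = 0 :> R) ->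
  g PI = 0.
Proof.
  intros Hg Hm.
  assert (Ho := kernel_orth g Hg Hm).
  assert (HH : forall n, RInt (fun s => g s * hk s ^ n) 0 (2 * PI) = 0 :> R).
  { intros n. transitivity (RInt (fun s => g s * hk s ^ n * cos (INR 0 * s)) 0 (2 * PI)); [|apply Ho]. apply RI_ext. intros s. simpl INR. rewrite Rmult_0_l, cos_0. ring. }
  destruct (Rtotal_order (g PI) 0) as [Hlt|[Heq|Hgt]].
  - exfalso. apply (kernel_pos (fun s => - g s)).
    + intros s Hs. exact (continuous_opp g s (Hg s Hs)).
    + lra.
    + intros n. rewrite (RI_ext _ (fun s => - (g s * hk s ^ n))) by (intros; ring).
      rewrite RI_opp, HH. ring.
      apply (ex_RInt_continuous (V := R_CompleteNormedModule)). intros z Hz.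
      rewrite Rmin_left, Rmax_right in Hz by (pose proof PI_RGT_0; lra).
      apply (c1_mult g (fun s => hk s ^ n)). apply Hg; lra. apply c1_pow. apply c1_hk.
  - exact Heq.
  - exfalso. exact (kernel_pos g Hg Hgt HH).
Qed.

Lemma polar p q a b : exists r ph, 0 <= r /\ p = a + r * cos (PI + ph) /\ q = b + r * sin (PI + ph).
Proof.
  set (X := p - a). set (Y := q - b).
  set (r := sqrt (X ^ 2 + Y ^ 2)).
  assert (Hr0 : 0 <= r) by apply sqrt_pos.
  assert (Hrr : r * r = X ^ 2 + Y ^ 2) by (apply sqrt_sqrt; nra).
  destruct (Req_dec r 0) as [Hr|Hr].
  - exists 0, 0. rewrite Hr in Hrr. unfold X, Y in Hrr.
    pose proof (pow2_ge_0 (p - a)). pose proof (pow2_ge_0 (q - b)).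
    assert (H1 : (p - a) ^ 2 = 0) by lra. assert (H2 : (q - b) ^ 2 = 0) by lra.
    simpl in H1, H2. rewrite Rmult_1_r in H1, H2.
    apply Rmult_integral in H1. apply Rmult_integral in H2.
    rewrite !Rmult_0_l. split; lra.
  - assert (Hp : 0 < r) by lra.
    set (x := X / r). set (y := Y / r).
    assert (Hxy : x ^ 2 + y ^ 2 = 1).
    { unfold x, y. field_simplify; [|lra]. rewrite <- Hrr. field. lra. }
    assert (Hx : -1 <= x <= 1) by nra.
    assert (Hs : sqrt (1 - x²) = Rabs y).
    { rewrite <- sqrt_Rsqr_abs. f_equal. unfold Rsqr. nra. }
    destruct (Rle_dec 0 y) as [Hy|Hy].
    + exists r, (acos x - PI). split; [lra|].
      replace (PI + (acos x - PI)) with (acos x) by ring.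
      rewrite cos_acos by exact Hx. rewrite sin_acos by exact Hx. rewrite Hs, Rabs_right by lra.
      unfold x, y, X, Y. split; field; lra.
    + exists r, (- acos x - PI). split; [lra|].
      replace (PI + (- acos x - PI)) with (- acos x) by ring.
      rewrite cos_neg, sin_neg, cos_acos by exact Hx. rewrite sin_acos by exact Hx. rewrite Hs, Rabs_left by lra.
      unfold x, y, X, Y. split; field; lra.
Qed.

Lemma int_cos0 : RInt (fun s => cos (INR 0 * s)) 0 (2 * PI) = 2 * PI :> R.
Proof.
  rewrite (RI_ext _ (fun _ => 1)) by (intros; simpl; rewrite Rmult_0_l; apply cos_0).
  rewrite RInt_const. change (scal ?x ?y) with (x * y). ring.
Qed.

Lemma int_cosS m : (0 < m)%nat -> RInt (fun s => cos (INR m * s)) 0 (2 * PI) = 0 :> R.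
Proof.
  intros Hm. assert (HK : INR m <> 0) by (apply not_0_INR; lia).
  apply is_RInt_unique.
  assert (HI := is_RInt_derive (fun s => sin (INR m * s) / INR m) (fun s => cos (INR m * s)) 0 (2 * PI)).
  assert (E : sin (INR m * (2 * PI)) / INR m - sin (INR m * 0) / INR m = 0).
  { rewrite sin_k2pi, Rmult_0_r, sin_0. field. exact HK. }
  assert (HI' : is_RInt (fun s => cos (INR m * s)) 0 (2 * PI) (sin (INR m * (2 * PI)) / INR m - sin (INR m * 0) / INR m)).
  { apply HI.
    - intros x _. eapply D_eq. apply (is_derive_div (fun s => sin (INR m * s)) (fun _ => INR m)).
      apply (D_sin (fun s => INR m * s) x (INR m)). apply (D_eq _ _ (0 * x + INR m * 1)). apply D_mult. apply D_const. apply D_id. ring.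
      apply D_const. exact HK. cbv beta. field. exact HK.
    - intros x _. apply c1_cosl. }
  rewrite E in HI'. exact HI'.
Qed.

Lemma key u a b (H : harmonic_R u) :
  (forall ph k r, (0 < k)%nat -> 0 < r -> Ac u a b ph k r = 0) ->
  forall p q, u p q = u a b.
Proof.
  intros Hk p q.
  destruct (polar p q a b) as [r [ph [Hr [Hp Hq]]]].
  destruct (Req_dec r 0) as [Hr0|Hr0].
  { rewrite Hp, Hq, Hr0, !Rmult_0_l, !Rplus_0_r. reflexivity. }
  assert (Hrp : 0 < r) by lra.
  c2prep H.
  set (g := fun s => Wc u a b ph r s - u a b).
  assert (Hg : forall s, 0 <= s <= 2 * PI -> continuous g s).
  { intros s _. unfold g. apply (cont2_t (fun r s => Wc u a b ph r s - u a b)). c2go. }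
  assert (Hexc : forall m, ex_RInt (fun s => cos (INR m * s)) 0 (2 * PI)).
  { intros m. apply (ex_RInt_continuous (V := R_CompleteNormedModule)). intros; apply c1_cosl. }
  assert (Hm : forall m : nat, RInt (fun s => g s * cos (INR m * s)) 0 (2 * PI) = 0 :> R).
  { intros m. unfold g.
    rewrite (RI_ext _ (fun s => Wc u a b ph r s * cos (INR m * s) + (- u a b) * cos (INR m * s))) by (intros; ring).
    rewrite RI_plus, RI_scal.
    - fold (Ac u a b ph m r). destruct m as [|m'].
      + rewrite coef0 by assumption. rewrite int_cos0. ring.
      + rewrite Hk by (lia || lra). rewrite int_cosS by lia. ring.
    - apply Hexc.
    - exr r.
    - apply (ex_RInt_scal (V := R_CompleteNormedModule)). apply Hexc. }
  assert (Z := circle_zero g Hg Hm). unfold g, Wc in Z.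
  rewrite Hp, Hq. lra.
Qed.

Lemma D_minus (f g : R -> R) x a b : is_derive f x a -> is_derive g x b ->
  is_derive (fun t => f t - g t) x (a - b).
Proof. intros H1 H2. exact (is_derive_minus f g x a b H1 H2). Qed.

Definition lin (g h : R -> R -> R) (l c : R) : R -> R -> R := fun x y => g x y - l * h x y - c.

Lemma px_lin g h l c : C1 g -> C1 h -> px (lin g h l c) = lin (px g) (px h) l 0.
Proof.
  intros Hg Hh. apply functional_extensionality; intros x. apply functional_extensionality; intros y.
  unfold px at 1. apply is_derive_unique. unfold lin.
  apply (D_eq _ _ (px g x y - (0 * h x y + l * px h x y) - 0)); [| ring].
  apply D_minus. apply D_minus. exact (C1_dx g Hg x y).
  apply (D_mult (fun _ => l) (fun t => h t y)). apply D_const. exact (C1_dx h Hh x y). apply D_const.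
Qed.

Lemma py_lin g h l c : C1 g -> C1 h -> py (lin g h l c) = lin (py g) (py h) l 0.
Proof.
  intros Hg Hh. apply functional_extensionality; intros x. apply functional_extensionality; intros y.
  unfold py at 1. apply is_derive_unique. unfold lin.
  apply (D_eq _ _ (py g x y - (0 * h x y + l * py h x y) - 0)); [| ring].
  apply D_minus. apply D_minus. exact (C1_dy g Hg x y).
  apply (D_mult (fun _ => l) (fun t => h x t)). apply D_const. exact (C1_dy h Hh x y). apply D_const.
Qed.

Lemma cont_lin g h l c x y :
  continuous (fun p : R * R => g (fst p) (snd p)) (x, y) ->
  continuous (fun p : R * R => h (fst p) (snd p)) (x, y) ->
  continuous (fun p : R * R => lin g h l c (fst p) (snd p)) (x, y).
Proof.
  intros H1 H2. unfold lin.
  apply (cont2_minus (fun x y => g x y - l * h x y) (fun _ _ => c)).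
  apply (cont2_minus g (fun x y => l * h x y)). exact H1.
  apply (cont2_mult (fun _ _ => l) h). apply cont2_const. exact H2. apply cont2_const.
Qed.

Lemma C1_lin g h l c : C1 g -> C1 h -> C1 (lin g h l c).
Proof.
  intros Hg Hh x y. rewrite (px_lin g h l c Hg Hh), (py_lin g h l c Hg Hh).
  split; [|split; [|split; [|split]]].
  - exists (px (lin g h l c) x y). rewrite (px_lin g h l c Hg Hh). unfold lin at 1.
    apply (D_eq _ _ (px g x y - (0 * h x y + l * px h x y) - 0)); [| unfold lin; ring].
    apply D_minus. apply D_minus. exact (C1_dx g Hg x y).
    apply (D_mult (fun _ => l) (fun t => h t y)). apply D_const. exact (C1_dx h Hh x y). apply D_const.
  - exists (py (lin g h l c) x y). rewrite (py_lin g h l c Hg Hh). unfold lin at 1.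
    apply (D_eq _ _ (py g x y - (0 * h x y + l * py h x y) - 0)); [| unfold lin; ring].
    apply D_minus. apply D_minus. exact (C1_dy g Hg x y).
    apply (D_mult (fun _ => l) (fun t => h x t)). apply D_const. exact (C1_dy h Hh x y). apply D_const.
  - apply cont_lin; apply C1_cont; assumption.
  - apply cont_lin; apply C1_cont_x; assumption.
  - apply cont_lin; apply C1_cont_y; assumption.
Qed.

Lemma harm_lin g h l c : harmonic_R g -> harmonic_R h -> harmonic_R (lin g h l c).
Proof.
  intros Hg Hh.
  assert (G1 := harm_C1 g Hg). assert (G2 := harm_C1x g Hg). assert (G3 := harm_C1y g Hg).
  assert (H1 := harm_C1 h Hh). assert (H2 := harm_C1x h Hh). assert (H3 := harm_C1y h Hh).
  split; [split; [|split]|].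
  - apply C1_lin; assumption.
  - rewrite px_lin by assumption. apply C1_lin; assumption.
  - rewrite py_lin by assumption. apply C1_lin; assumption.
  - intros x y. rewrite (px_lin g h l c G1 H1), (py_lin g h l c G1 H1).
    rewrite (px_lin (px g) (px h) l 0 G2 H2), (py_lin (py g) (py h) l 0 G3 H3).
    unfold lin. assert (Lg := harm_lap g Hg x y). assert (Lh := harm_lap h Hh x y).
    replace (px (px g) x y) with (- py (py g) x y) by lra.
    replace (px (px h) x y) with (- py (py h) x y) by lra. ring.
Qed.

Lemma UC w a b rho (H : harmonic_R w) : 0 < rho ->
  (forall x y, (x - a) ^ 2 + (y - b) ^ 2 < rho ^ 2 -> w x y = 0) -> forall x y, w x y = 0.
Proof.
  intros Hrho Hz.
  assert (Hc : w a b = 0) by (apply Hz; nra).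
  intros x y. rewrite <- Hc. revert x y. apply key; [exact H|].
  intros ph k r Hk Hr.
  assert (Hh : Ac w a b ph k (rho / 2) = 0).
  { unfold Ac. rewrite (RI_ext _ (fun _ => 0)).
    - rewrite RInt_const. change (scal ?x ?y) with (x * y). ring.
    - intros t. unfold Wc. rewrite Hz. ring.
      replace (a + rho / 2 * cos (t + ph) - a) with (rho / 2 * cos (t + ph)) by ring.
      replace (b + rho / 2 * sin (t + ph) - b) with (rho / 2 * sin (t + ph)) by ring.
      assert (Hcs := sin2_cos2 (t + ph)). unfold Rsqr in Hcs. nra. }
  rewrite (coef w a b ph k H) in Hh by lra.
  assert (Hp : (rho / 2) ^ k <> 0) by (apply pow_nonzero; lra).
  rewrite (coef w a b ph k H) by lra.
  destruct (Rmult_integral _ _ Hh) as [E|E]; [rewrite E; ring | contradiction].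
Qed.

Lemma LV u c (H : harmonic_R u) :
  (forall x y, u x y <= c) \/ (forall x y, c <= u x y) -> forall p q, u p q = u 0 0.
Proof.
  intros Hb.
  assert (Hs : exists sg, (sg = 1 \/ sg = -1) /\ forall x y, 0 <= sg * (u x y - c)).
  { destruct Hb as [Hb|Hb].
    - exists (-1). split; [right; reflexivity|]. intros x y. specialize (Hb x y). lra.
    - exists 1. split; [left; reflexivity|]. intros x y. specialize (Hb x y). lra. }
  destruct Hs as [sg [Hsg Hs]].
  apply key; [exact H|].
  intros ph k r Hk Hr. c2prep H.
  set (B := 2 * PI * Rabs (u 0 0 - c)).
  assert (Hexc : forall m, ex_RInt (fun s => cos (INR m * s)) 0 (2 * PI)).
  { intros m. apply (ex_RInt_continuous (V := R_CompleteNormedModule)). intros; apply c1_cosl. }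
  assert (HPI := PI_RGT_0).
  assert (Bd : forall r', 0 < r' -> Rabs (Ac u 0 0 ph k r') <= B).
  { intros r' Hr'.
    assert (E1 : Ac u 0 0 ph k r' = RInt (fun t => (Wc u 0 0 ph r' t - c) * cos (INR k * t)) 0 (2 * PI) :> R).
    { rewrite (RI_ext _ (fun t => Wc u 0 0 ph r' t * cos (INR k * t) + (- c) * cos (INR k * t))) by (intros; ring).
      rewrite RI_plus.
      - rewrite RI_scal by (exact (Hexc k)). rewrite int_cosS by lia. unfold Ac. rewrite Rmult_0_r, Rplus_0_r. reflexivity.
      - exr r'.
      - apply (ex_RInt_scal (V := R_CompleteNormedModule)). exact (Hexc k). }
    rewrite E1.
    eapply Rle_trans. apply abs_RInt_le. lra. exr r'.
    eapply Rle_trans. apply (RInt_le _ (fun t => sg * (Wc u 0 0 ph r' t - c))).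
    + lra.
    + apply (ex_RInt_continuous (V := R_CompleteNormedModule)). intros z _.
      apply (continuous_comp_2 (fun _ => r') (fun t => t) (fun r t => Rabs ((Wc u 0 0 ph r t - c) * cos (INR k * t)))).
      apply continuous_const. apply continuous_id.
      apply (continuous_comp (fun p : R * R => (Wc u 0 0 ph (fst p) (snd p) - c) * cos (INR k * snd p)) Rabs).
      change (cont2 (fun r t => (Wc u 0 0 ph r t - c) * cos (INR k * t)) r' z). c2go.
      apply continuous_Rabs.
    + exr r'.
    + intros t _. rewrite Rabs_mult.
      assert (Hc1 : Rabs (cos (INR k * t)) <= 1) by apply Rabs_le, COS_bound.
      assert (E : Rabs (Wc u 0 0 ph r' t - c) = sg * (Wc u 0 0 ph r' t - c)).
      { assert (Hp := Hs (0 + r' * cos (t + ph)) (0 + r' * sin (t + ph))). fold (Wc u 0 0 ph r' t) in Hp.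
        destruct Hsg as [-> | ->].
        - rewrite Rabs_right; lra.
        - rewrite Rabs_left1; lra. }
      rewrite E. assert (0 <= sg * (Wc u 0 0 ph r' t - c)) by (rewrite <- E; apply Rabs_pos).
      assert (0 <= Rabs (cos (INR k * t))) by apply Rabs_pos. nra.
    + rewrite (RI_ext _ (fun t => sg * (Wc u 0 0 ph r' t * cos (INR 0 * t)) + (- (sg * c)) * cos (INR 0 * t))).
      * rewrite RI_plus.
        -- rewrite RI_scal by exr r'. rewrite RI_scal by exact (Hexc 0%nat).
           fold (Ac u 0 0 ph 0 r'). rewrite coef0 by assumption. rewrite int_cos0.
           unfold B. assert (Hs0 := Hs 0 0). destruct Hsg as [-> | ->].
           ++ rewrite Rabs_right by lra. lra.
           ++ rewrite Rabs_left1 by lra. lra.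
        -- apply (ex_RInt_scal (V := R_CompleteNormedModule)); exr r'.
        -- apply (ex_RInt_scal (V := R_CompleteNormedModule)); exact (Hexc 0%nat).
      * intros t. simpl INR. rewrite Rmult_0_l, cos_0. ring. }
  rewrite (coef u 0 0 ph k H) by exact Hr.
  set (al := Ac u 0 0 ph k 1).
  destruct (Req_dec al 0) as [E|E]; [rewrite E; ring|exfalso].
  assert (HB0 : 0 <= B) by (unfold B; apply Rmult_le_pos; [lra|apply Rabs_pos]).
  assert (Hal : 0 < Rabs al) by (apply Rabs_pos_lt; exact E).
  set (r1 := B / Rabs al + 1).
  assert (Hr1 : 1 <= r1) by (unfold r1; assert (0 <= B / Rabs al) by (apply Rdiv_le_0_compat; lra); lra).
  assert (Hbd := Bd r1 ltac:(lra)).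
  rewrite (coef u 0 0 ph k H) in Hbd by lra. fold al in Hbd.
  rewrite Rabs_mult, (Rabs_right (r1 ^ k)) in Hbd by (apply Rle_ge, pow_le; lra).
  assert (Hpk : r1 <= r1 ^ k).
  { destruct k as [|k']; [lia|]. simpl. assert (1 <= r1 ^ k') by (apply pow_R1_Rle; lra). nra. }
  assert (Rabs al * r1 <= Rabs al * r1 ^ k) by (apply Rmult_le_compat_l; lra).
  assert (Rabs al * r1 = B + Rabs al) by (unfold r1; field; lra).
  lra.
Qed.

Lemma cont_affine p d s : continuous (fun s => p + s * d) s.
Proof.
  apply (ex_derive_continuous (fun s => p + s * d)). exists (0 + (1 * d + s * 0)).
  apply D_plus. apply D_const. apply (D_mult (fun s => s) (fun _ => d)). apply D_id. apply D_const.
Qed.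

Lemma between_min_max fa fb w : (fa - w) * (fb - w) <= 0 -> Rmin fa fb <= w <= Rmax fa fb.
Proof. intros H. unfold Rmin, Rmax. destruct (Rle_dec fa fb); split; nra. Qed.

Lemma SJ u (H : harmonic_R u) : (exists p q, u p q <> u 0 0) -> forall y, exists p q, u p q = y.
Proof.
  intros [p0 [q0 Hne]] y.
  assert (E1 : exists p1 q1, y <= u p1 q1).
  { apply NNPP; intro N. apply Hne. apply (LV u y H). left. intros x y'.
    apply Rnot_lt_le. intro Hl. apply N. exists x, y'. lra. }
  assert (E2 : exists p2 q2, u p2 q2 <= y).
  { apply NNPP; intro N. apply Hne. apply (LV u y H). right. intros x y'.
    apply Rnot_lt_le. intro Hl. apply N. exists x, y'. lra. }
  destruct E1 as [p1 [q1 H1]]. destruct E2 as [p2 [q2 H2]].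
  set (f := fun s => u (p1 + s * (p2 - p1)) (q1 + s * (q2 - q1))).
  assert (Hc : continuity f).
  { intros s. apply (proj2 (continuity_pt_filterlim f s)).
    apply (continuous_comp_2 (fun s => p1 + s * (p2 - p1)) (fun s => q1 + s * (q2 - q1)) u).
    apply cont_affine. apply cont_affine. apply C1_cont. apply harm_C1; exact H. }
  assert (F0 : f 0 = u p1 q1) by (unfold f; rewrite !Rmult_0_l, !Rplus_0_r; reflexivity).
  assert (F1 : f 1 = u p2 q2) by (unfold f; f_equal; ring).
  destruct (IVT_gen f 0 1 y Hc) as [x [_ Hx]].
  { apply between_min_max. rewrite F0, F1. nra. }
  exists (p1 + x * (p2 - p1)), (q1 + x * (q2 - q1)). exact Hx.
Qed.

Lemma betw_sq a x t : Rmin a x <= t <= Rmax a x -> (t - a) ^ 2 <= (x - a) ^ 2.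
Proof. unfold Rmin, Rmax. destruct (Rle_dec a x); intros; nra. Qed.

Lemma GD (g : R -> R -> R) a b rho :
  (forall x y, (x - a) ^ 2 + (y - b) ^ 2 < rho ^ 2 ->
     is_derive (fun t => g t y) x 0 /\ is_derive (fun t => g x t) y 0) ->
  forall x y, (x - a) ^ 2 + (y - b) ^ 2 < rho ^ 2 -> g x y = g a b.
Proof.
  intros Hd x y Hxy.
  assert (S1 : g x b = g a b).
  { destruct (MVT_gen (fun t => g t b) a x (fun _ => 0)) as [c [_ Hc]].
    - intros t Ht. apply (Hd t b). assert (Hs := betw_sq a x t ltac:(lra)).
      pose proof (pow2_ge_0 (y - b)). replace ((b - b) ^ 2) with 0 by ring. lra.
    - intros t Ht. apply (D_cont _ _ 0). apply (Hd t b). assert (Hs := betw_sq a x t Ht).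
      pose proof (pow2_ge_0 (y - b)). replace ((b - b) ^ 2) with 0 by ring. lra.
    - lra. }
  assert (S2 : g x y = g x b).
  { destruct (MVT_gen (fun t => g x t) b y (fun _ => 0)) as [c [_ Hc]].
    - intros t Ht. apply (Hd x t). assert (Hs := betw_sq b y t ltac:(lra)). lra.
    - intros t Ht. apply (D_cont _ _ 0). apply (Hd x t). assert (Hs := betw_sq b y t Ht). lra.
    - lra. }
  lra.
Qed.

Lemma avoid (l : list R) a : forall eps, 0 < eps -> exists y, a < y < a + eps /\ ~ In y l.
Proof.
  induction l as [|h t IH]; intros eps He.
  - exists (a + eps / 2). split; [lra|]. intros [].
  - set (e' := if Rlt_dec a h then Rmin eps (h - a) else eps).
    assert (He' : 0 < e' /\ e' <= eps /\ (a < h -> e' <= h - a)).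
    { unfold e'. destruct (Rlt_dec a h).
      - split; [apply Rmin_glb_lt; lra|]. split; [apply Rmin_l|]. intros; apply Rmin_r.
      - split; [lra|]. split; [lra|]. intros; lra. }
    destruct (IH e' (proj1 He')) as [y [Hy Hn]].
    exists y. split; [lra|]. intros [E|E].
    + subst h. destruct He' as [_ [_ H3]]. assert (a < y) by lra. specialize (H3 H). lra.
    + exact (Hn E).
Qed.

Lemma LS (g dg : R -> R -> R) :
  (forall x y, is_derive (fun t => g t y) x (dg x y)) ->
  (forall x y, continuous (fun p : R * R => dg (fst p) (snd p)) (x, y)) ->
  (forall x y, continuous (fun p : R * R => g (fst p) (snd p)) (x, y)) ->
  forall x1 y1, dg x1 y1 <> 0 -> forall l : list (R * R),
  exists x y, g x y = g x1 y1 /\ ~ In (x, y) l.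
Proof.
  intros Hd Hdc Hgc x1 y1 Hne l.
  set (d := dg x1 y1). set (w0 := g x1 y1).
  assert (Hdp : 0 < Rabs d / 2) by (assert (0 < Rabs d) by (apply Rabs_pos_lt; exact Hne); lra).
  destruct (cont2_2d dg x1 y1 (Hdc x1 y1) (mkposreal _ Hdp)) as [dl Hdl].
  cbn [pos] in Hdl.
  assert (Hdl0 := cond_pos dl).
  set (e := dl / 2).
  assert (Hsg : forall u, Rabs (u - x1) < dl -> 0 < dg u y1 * d).
  { intros u Hu. assert (H0 : Rabs (y1 - y1) < dl) by (rewrite Rminus_diag, Rabs_R0; lra).
    specialize (Hdl u y1 Hu H0). fold d in Hdl. apply Rabs_def2 in Hdl.
    destruct (Rle_dec 0 d).
    - rewrite Rabs_right in Hdl by lra. nra.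
    - rewrite Rabs_left in Hdl by lra. nra. }
  assert (Hcont : forall y, continuity (fun t => g t y)).
  { intros y t. exact (D_cont _ _ _ (Hd t y)). }
  set (Ap := g (x1 + e) y1 - w0). set (Am := g (x1 - e) y1 - w0).
  assert (HAp : 0 < Ap * d).
  { destruct (MVT_gen (fun t => g t y1) x1 (x1 + e) (fun t => dg t y1)) as [c [Hc E]].
    - intros t _. apply Hd.
    - intros t _. apply Hcont.
    - rewrite Rmin_left, Rmax_right in Hc by (unfold e; lra).
      assert (Hc' : Rabs (c - x1) < dl) by (apply Rabs_def1; unfold e in *; lra).
      assert (Hs := Hsg c Hc'). unfold Ap, w0. rewrite E.
      replace (dg c y1 * (x1 + e - x1) * d) with (e * (dg c y1 * d)) by ring.
      apply Rmult_lt_0_compat; [unfold e; lra | exact Hs]. }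
  assert (HAm : Am * d < 0).
  { destruct (MVT_gen (fun t => g t y1) x1 (x1 - e) (fun t => dg t y1)) as [c [Hc E]].
    - intros t _. apply Hd.
    - intros t _. apply Hcont.
    - rewrite Rmin_right, Rmax_left in Hc by (unfold e; lra).
      assert (Hc' : Rabs (c - x1) < dl) by (apply Rabs_def1; unfold e in *; lra).
      assert (Hs := Hsg c Hc'). unfold Am, w0. rewrite E.
      replace (dg c y1 * (x1 - e - x1) * d) with (- (e * (dg c y1 * d))) by ring.
      assert (0 < e * (dg c y1 * d)) by (apply Rmult_lt_0_compat; [unfold e; lra | exact Hs]). lra. }
  assert (HApn : 0 < Rabs Ap) by (apply Rabs_pos_lt; intro E; rewrite E in HAp; lra).
  assert (HAmn : 0 < Rabs Am) by (apply Rabs_pos_lt; intro E; rewrite E in HAm; lra).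
  destruct (cont2_2d g (x1 + e) y1 (Hgc _ _) (mkposreal _ HApn)) as [dp Hdp'].
  destruct (cont2_2d g (x1 - e) y1 (Hgc _ _) (mkposreal _ HAmn)) as [dm Hdm'].
  cbn [pos] in Hdp', Hdm'.
  assert (Hdp0 := cond_pos dp). assert (Hdm0 := cond_pos dm).
  destruct (avoid (map snd l) y1 (Rmin dp dm) ltac:(apply Rmin_glb_lt; lra)) as [y [Hy Hny]].
  assert (Hyp : Rabs (y - y1) < dp) by (apply Rabs_def1; assert (Rmin dp dm <= dp) by apply Rmin_l; lra).
  assert (Hym : Rabs (y - y1) < dm) by (apply Rabs_def1; assert (Rmin dp dm <= dm) by apply Rmin_r; lra).
  assert (Gp := Hdp' (x1 + e) y ltac:(rewrite Rminus_diag, Rabs_R0; lra) Hyp).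
  assert (Gm := Hdm' (x1 - e) y ltac:(rewrite Rminus_diag, Rabs_R0; lra) Hym).
  apply Rabs_def2 in Gp. apply Rabs_def2 in Gm.
  assert (Hprod : (g (x1 - e) y - w0) * (g (x1 + e) y - w0) <= 0).
  { fold Ap in Gp. fold Am in Gm. unfold Ap, Am in *.
    destruct (Rlt_dec 0 d) as [Hd0|Hd0].
    - assert (0 < g (x1 + e) y1 - w0) by nra. assert (g (x1 - e) y1 - w0 < 0) by nra.
      rewrite Rabs_right in Gp by lra. rewrite Rabs_left in Gm by lra. nra.
    - assert (d < 0) by (destruct (Req_dec d 0); [contradiction|lra]).
      assert (g (x1 + e) y1 - w0 < 0) by nra. assert (0 < g (x1 - e) y1 - w0) by nra.
      rewrite Rabs_left in Gp by lra. rewrite Rabs_right in Gm by lra. nra. }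
  destruct (IVT_gen (fun t => g t y) (x1 - e) (x1 + e) w0 (Hcont y)) as [x [_ Hx]].
  { apply between_min_max. exact Hprod. }
  exists x, y. split; [exact Hx|]. intro Hin. apply Hny.
  exact (in_map snd l (x, y) Hin).
Qed.

Lemma swap_cont (F : R -> R -> R) x y :
  continuous (fun p : R * R => F (fst p) (snd p)) (y, x) ->
  continuous (fun p : R * R => F (snd p) (fst p)) (x, y).
Proof.
  intros H. exact (continuous_comp_2 (fun p : R * R => snd p) (fun p : R * R => fst p) F (x, y)
    (continuous_snd x y) (continuous_fst x y) H).
Qed.

Lemma LS_main g (Hg : C1 g) : (exists p q, g p q <> g 0 0) ->
  exists w0, forall l : list (R * R), exists x y, g x y = w0 /\ ~ In (x, y) l.
Proof.
  intros [p [q Hne]].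
  assert (Hex : exists x1 y1, px g x1 y1 <> 0 \/ py g x1 y1 <> 0).
  { apply NNPP; intro N. apply Hne. apply (GD g 0 0 (Rabs p + Rabs q + 1)).
    - intros x y _.
      assert (E1 : px g x y = 0) by (apply NNPP; intro; apply N; exists x, y; left; assumption).
      assert (E2 : py g x y = 0) by (apply NNPP; intro; apply N; exists x, y; right; assumption).
      split. rewrite <- E1. exact (C1_dx g Hg x y). rewrite <- E2. exact (C1_dy g Hg x y).
    - rewrite !Rminus_0_r. rewrite <- (pow2_abs p), <- (pow2_abs q).
      pose proof (Rabs_pos p). pose proof (Rabs_pos q). nra. }
  destruct Hex as [x1 [y1 [Hx|Hy]]].
  - exists (g x1 y1). intros l.
    exact (LS g (px g) (C1_dx g Hg) (C1_cont_x g Hg) (C1_cont g Hg) x1 y1 Hx l).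
  - exists (g x1 y1). intros l.
    destruct (LS (fun x y => g y x) (fun x y => py g y x) (fun x y => C1_dy g Hg y x)
       (fun x y => swap_cont (py g) x y (C1_cont_y g Hg y x))
       (fun x y => swap_cont g x y (C1_cont g Hg y x)) y1 x1 Hy
       (map (fun p => (snd p, fst p)) l)) as [x [y [E Hn]]].
    exists y, x. split; [exact E|]. intro Hin. apply Hn.
    exact (in_map (fun p => (snd p, fst p)) l (y, x) Hin).
Qed.

Lemma deriv_loc_eq (f g : R -> R) x a b : locally x (fun t => f t = g t) ->
  is_derive f x a -> is_derive g x b -> a = b.
Proof.
  intros Hl Ha Hb. assert (Ha' := is_derive_ext_loc f g x a Hl Ha).
  rewrite <- (is_derive_unique g x a Ha'). exact (is_derive_unique g x b Hb).
Qed.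

Lemma loc_lt (f : R -> R) y c : (forall t, continuity_pt f t) -> f y < c -> locally y (fun t => f t < c).
Proof.
  intros Hc Hy.
  assert (He : 0 < c - f y) by lra.
  assert (Hl := proj1 (continuity_pt_locally f y) (Hc y) (mkposreal _ He)).
  apply (filter_imp (fun u => Rabs (f u - f y) < c - f y)).
  - intros u Hu. cbn [pos] in Hu. apply Rabs_def2 in Hu. lra.
  - exact Hl.
Qed.

Lemma sq_cont (k a : R) t : continuity_pt (fun t => k + (t - a) ^ 2) t.
Proof.
  apply (D_cont _ _ (0 + INR 2 * (1 - 0) * (t - a) ^ 1)).
  apply D_plus. apply D_const. apply (is_derive_pow (fun t => t - a) 2 t (1 - 0)).
  apply D_minus. apply D_id. apply D_const.
Qed.

Lemma disc_open_y a b rho x y : (x - a) ^ 2 + (y - b) ^ 2 < rho ^ 2 ->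
  locally y (fun t => (x - a) ^ 2 + (t - b) ^ 2 < rho ^ 2).
Proof. intros H. apply (loc_lt (fun t => (x - a) ^ 2 + (t - b) ^ 2)). intros; apply sq_cont. exact H. Qed.

Lemma disc_open_x a b rho x y : (x - a) ^ 2 + (y - b) ^ 2 < rho ^ 2 ->
  locally x (fun t => (t - a) ^ 2 + (y - b) ^ 2 < rho ^ 2).
Proof.
  intros H. apply (filter_imp (fun t => (y - b) ^ 2 + (t - a) ^ 2 < rho ^ 2)).
  intros t Ht; lra.
  apply (loc_lt (fun t => (y - b) ^ 2 + (t - a) ^ 2)). intros; apply sq_cont. lra.
Qed.

Lemma disc_box x y x1 y1 rho : 0 < rho -> (x - x1) ^ 2 + (y - y1) ^ 2 < rho ^ 2 ->
  Rabs (x - x1) < rho /\ Rabs (y - y1) < rho.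
Proof.
  intros Hr H. pose proof (pow2_ge_0 (x - x1)). pose proof (pow2_ge_0 (y - y1)).
  split; apply Rabs_def1; nra.
Qed.

Lemma Schwarz_C2 g : C2 g -> forall x y, px (py g) x y = py (px g) x y.
Proof.
  intros [H1 [Hx Hy]] x y. unfold px, py.
  apply (Schwarz g x y).
  - exists (mkposreal 1 Rlt_0_1). intros u v _ _.
    split; [exact (C1_ex_x g H1 u v)|]. split; [exact (C1_ex_y g H1 u v)|].
    split; [exact (C1_ex_x (py g) Hy u v)| exact (C1_ex_y (px g) Hx u v)].
  - apply cont2_2d. exact (C1_cont_x (py g) Hy x y).
  - apply cont2_2d. exact (C1_cont_y (px g) Hx x y).
Qed.

Lemma ex_sp (f1 f2 f3 f4 : R -> R) x : ex_derive f1 x -> ex_derive f2 x -> ex_derive f3 x -> ex_derive f4 x ->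
  ex_derive (fun t => f1 t * f2 t + f3 t * f4 t) x.
Proof.
  intros H1 H2 H3 H4.
  exact (ex_derive_plus (fun t => f1 t * f2 t) (fun t => f3 t * f4 t) x
    (ex_derive_mult f1 f2 x H1 H2) (ex_derive_mult f3 f4 x H3 H4)).
Qed.

Lemma local_lin u v (Hu : harmonic_R u) (Hv : harmonic_R v) a b r0 (Hr0 : 0 < r0)
  (HJ : forall x y, (x - a) ^ 2 + (y - b) ^ 2 < r0 ^ 2 ->
        px u x y * py v x y - py u x y * px v x y = 0) :
  (exists c a' b' rho, 0 < rho /\ forall x y, (x - a') ^ 2 + (y - b') ^ 2 < rho ^ 2 -> lin u u 0 c x y = 0) \/
  (exists l c a' b' rho, 0 < rho /\ forall x y, (x - a') ^ 2 + (y - b') ^ 2 < rho ^ 2 -> lin v u l c x y = 0).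
Proof.
  assert (Cu := harm_C1 u Hu). assert (Cux := harm_C1x u Hu). assert (Cuy := harm_C1y u Hu).
  assert (Cv := harm_C1 v Hv). assert (Cvx := harm_C1x v Hv). assert (Cvy := harm_C1y v Hv).
  destruct (classic (forall x y, (x - a) ^ 2 + (y - b) ^ 2 < r0 ^ 2 -> px u x y = 0 /\ py u x y = 0)) as [HA|HB].
  { left. exists (u a b), a, b, r0. split; [exact Hr0|]. intros x y Hxy. unfold lin.
    rewrite (GD u a b r0) by (exact Hxy || (intros x' y' H'; destruct (HA x' y' H') as [E1 E2]; split;
        [rewrite <- E1; exact (C1_dx u Cu x' y') | rewrite <- E2; exact (C1_dy u Cu x' y')])). ring. }
  right.
  set (Nf := fun x y => px u x y * px u x y + py u x y * py u x y).
  assert (Hex : exists x1 y1, (x1 - a) ^ 2 + (y1 - b) ^ 2 < r0 ^ 2 /\ 0 < Nf x1 y1).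
  { apply NNPP; intro N. apply HB. intros x y Hxy.
    assert (Nf x y <= 0) by (apply Rnot_lt_le; intro; apply N; exists x, y; split; assumption).
    unfold Nf in H. split; nra. }
  destruct Hex as [x1 [y1 [H1in HN1]]].
  assert (HNc : continuity_2d_pt Nf x1 y1).
  { apply cont2_2d. unfold Nf.
    apply (cont2_plus (fun x y => px u x y * px u x y) (fun x y => py u x y * py u x y)).
    apply (cont2_mult (px u) (px u)); exact (C1_cont_x u Cu x1 y1).
    apply (cont2_mult (py u) (py u)); exact (C1_cont_y u Cu x1 y1). }
  assert (HN2 : 0 < Nf x1 y1 / 2) by lra.
  destruct (HNc (mkposreal _ HN2)) as [d1 Hd1]. cbn [pos] in Hd1.
  set (Q := fun x y => (x - a) ^ 2 + (y - b) ^ 2).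
  assert (HQc : continuity_2d_pt Q x1 y1).
  { apply cont2_2d. unfold Q.
    apply (cont2_plus (fun x y => (x - a) ^ 2) (fun x y => (y - b) ^ 2)).
    apply (cont2_pow (fun x y => x - a)). apply (cont2_minus (fun x y => x) (fun _ _ => a)). apply cont2_fst. apply cont2_const.
    apply (cont2_pow (fun x y => y - b)). apply (cont2_minus (fun x y => y) (fun _ _ => b)). apply cont2_snd. apply cont2_const. }
  assert (HQ2 : 0 < r0 ^ 2 - Q x1 y1) by (unfold Q; lra).
  destruct (HQc (mkposreal _ HQ2)) as [d2 Hd2]. cbn [pos] in Hd2.
  set (rho := Rmin d1 d2).
  assert (Hrho : 0 < rho) by (apply Rmin_glb_lt; apply cond_pos).
  set (D1 := fun x y => (x - x1) ^ 2 + (y - y1) ^ 2 < rho ^ 2).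
  assert (HD1 : forall x y, D1 x y -> 0 < Nf x y /\ (x - a) ^ 2 + (y - b) ^ 2 < r0 ^ 2).
  { intros x y Hxy. destruct (disc_box x y x1 y1 rho Hrho Hxy) as [Bx By].
    assert (rho <= d1) by apply Rmin_l. assert (rho <= d2) by apply Rmin_r.
    specialize (Hd1 x y ltac:(lra) ltac:(lra)). specialize (Hd2 x y ltac:(lra) ltac:(lra)).
    apply Rabs_def2 in Hd1. apply Rabs_def2 in Hd2. unfold Q in Hd2. split; lra. }
  set (lam := fun x y => (px v x y * px u x y + py v x y * py u x y) / Nf x y).
  assert (F1 : forall x y, D1 x y -> px v x y = lam x y * px u x y /\ py v x y = lam x y * py u x y).
  { intros x y Hxy. destruct (HD1 x y Hxy) as [HN Hin]. assert (HJ0 := HJ x y Hin).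
    unfold lam. unfold Nf in *.
    set (ux := px u x y) in *. set (uy := py u x y) in *. set (vx := px v x y) in *. set (vy := py v x y) in *.
    split.
    - replace ((vx * ux + vy * uy) / (ux * ux + uy * uy) * ux) with
        ((vx * (ux * ux + uy * uy) + uy * (ux * vy - uy * vx)) / (ux * ux + uy * uy)) by (field; lra).
      rewrite HJ0. field. lra.
    - replace ((vx * ux + vy * uy) / (ux * ux + uy * uy) * uy) with
        ((vy * (ux * ux + uy * uy) - ux * (ux * vy - uy * vx)) / (ux * ux + uy * uy)) by (field; lra).
      rewrite HJ0. field. lra. }
  assert (LX : forall x y, D1 x y -> ex_derive (fun t => lam t y) x).
  { intros x y Hxy. destruct (HD1 x y Hxy) as [HN _]. unfold lam, Nf.
    apply (ex_derive_div (fun t => px v t y * px u t y + py v t y * py u t y)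
                         (fun t => px u t y * px u t y + py u t y * py u t y)).
    apply ex_sp; [exact (C1_ex_x _ Cvx x y)|exact (C1_ex_x _ Cux x y)|exact (C1_ex_x _ Cvy x y)|exact (C1_ex_x _ Cuy x y)].
    apply ex_sp; [exact (C1_ex_x _ Cux x y)|exact (C1_ex_x _ Cux x y)|exact (C1_ex_x _ Cuy x y)|exact (C1_ex_x _ Cuy x y)].
    unfold Nf in HN. lra. }
  assert (LY : forall x y, D1 x y -> ex_derive (fun t => lam x t) y).
  { intros x y Hxy. destruct (HD1 x y Hxy) as [HN _]. unfold lam, Nf.
    apply (ex_derive_div (fun t => px v x t * px u x t + py v x t * py u x t)
                         (fun t => px u x t * px u x t + py u x t * py u x t)).
    apply ex_sp; [exact (C1_ex_y _ Cvx x y)|exact (C1_ex_y _ Cux x y)|exact (C1_ex_y _ Cvy x y)|exact (C1_ex_y _ Cuy x y)].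
    apply ex_sp; [exact (C1_ex_y _ Cux x y)|exact (C1_ex_y _ Cux x y)|exact (C1_ex_y _ Cuy x y)|exact (C1_ex_y _ Cuy x y)].
    unfold Nf in HN. lra. }
  assert (Z : forall x y, D1 x y ->
     Derive (fun t => lam t y) x = 0 /\ Derive (fun t => lam x t) y = 0).
  { intros x y Hxy.
    set (Lx := Derive (fun t => lam t y) x). set (Ly := Derive (fun t => lam x t) y).
    assert (HLx : is_derive (fun t => lam t y) x Lx) by exact (Derive_correct _ _ (LX x y Hxy)).
    assert (HLy : is_derive (fun t => lam x t) y Ly) by exact (Derive_correct _ _ (LY x y Hxy)).
    assert (LocY : locally y (fun t => D1 x t)) by (apply (disc_open_y x1 y1 rho x y); exact Hxy).
    assert (LocX : locally x (fun t => D1 t y)) by (apply (disc_open_x x1 y1 rho x y); exact Hxy).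
    assert (E1 : py (px v) x y = Ly * px u x y + lam x y * py (px u) x y).
    { apply (deriv_loc_eq (fun t => px v x t) (fun t => lam x t * px u x t) y).
      - apply (filter_imp (fun t => D1 x t)). intros t Ht. exact (proj1 (F1 x t Ht)). exact LocY.
      - exact (C1_dy _ Cvx x y).
      - exact (D_mult (fun t => lam x t) (fun t => px u x t) y Ly _ HLy (C1_dy _ Cux x y)). }
    assert (E2 : px (py v) x y = Lx * py u x y + lam x y * px (py u) x y).
    { apply (deriv_loc_eq (fun t => py v t y) (fun t => lam t y * py u t y) x).
      - apply (filter_imp (fun t => D1 t y)). intros t Ht. exact (proj2 (F1 t y Ht)). exact LocX.
      - exact (C1_dx _ Cvy x y).
      - exact (D_mult (fun t => lam t y) (fun t => py u t y) x Lx _ HLx (C1_dx _ Cuy x y)). }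
    assert (E3 : px (px v) x y = Lx * px u x y + lam x y * px (px u) x y).
    { apply (deriv_loc_eq (fun t => px v t y) (fun t => lam t y * px u t y) x).
      - apply (filter_imp (fun t => D1 t y)). intros t Ht. exact (proj1 (F1 t y Ht)). exact LocX.
      - exact (C1_dx _ Cvx x y).
      - exact (D_mult (fun t => lam t y) (fun t => px u t y) x Lx _ HLx (C1_dx _ Cux x y)). }
    assert (E4 : py (py v) x y = Ly * py u x y + lam x y * py (py u) x y).
    { apply (deriv_loc_eq (fun t => py v x t) (fun t => lam x t * py u x t) y).
      - apply (filter_imp (fun t => D1 x t)). intros t Ht. exact (proj2 (F1 x t Ht)). exact LocY.
      - exact (C1_dy _ Cvy x y).
      - exact (D_mult (fun t => lam x t) (fun t => py u x t) y Ly _ HLy (C1_dy _ Cuy x y)). }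
    assert (S1 := Schwarz_C2 u (proj1 Hu) x y). assert (S2 := Schwarz_C2 v (proj1 Hv) x y).
    assert (L1 := harm_lap u Hu x y). assert (L2 := harm_lap v Hv x y).
    assert (A1 : Ly * px u x y = Lx * py u x y).
    { assert (Ly * px u x y + lam x y * py (px u) x y = Lx * py u x y + lam x y * px (py u) x y) by lra.
      rewrite S1 in H. lra. }
    assert (A2 : Lx * px u x y + Ly * py u x y = 0).
    { assert (Lx * px u x y + Ly * py u x y + lam x y * (px (px u) x y + py (py u) x y) = 0) by lra.
      rewrite L1 in H. lra. }
    destruct (HD1 x y Hxy) as [HN _]. unfold Nf in HN.
    assert (B1 : Lx * (px u x y * px u x y + py u x y * py u x y) = 0).
    { replace (Lx * (px u x y * px u x y + py u x y * py u x y)) with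
        (px u x y * (Lx * px u x y + Ly * py u x y) + py u x y * (Lx * py u x y - Ly * px u x y)) by ring.
      rewrite A2, A1. ring. }
    assert (B2 : Ly * (px u x y * px u x y + py u x y * py u x y) = 0).
    { replace (Ly * (px u x y * px u x y + py u x y * py u x y)) with
        (py u x y * (Lx * px u x y + Ly * py u x y) - px u x y * (Lx * py u x y - Ly * px u x y)) by ring.
      rewrite A2, A1. ring. }
    split.
    - destruct (Rmult_integral _ _ B1); [assumption|lra].
    - destruct (Rmult_integral _ _ B2); [assumption|lra]. }
  assert (Hlam : forall x y, D1 x y -> lam x y = lam x1 y1).
  { intros x y Hxy. apply (GD lam x1 y1 rho); [|exact Hxy].
    intros x' y' H'. destruct (Z x' y' H') as [Z1 Z2]. split.
    - rewrite <- Z1. exact (Derive_correct _ _ (LX x' y' H')).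
    - rewrite <- Z2. exact (Derive_correct _ _ (LY x' y' H')). }
  set (l0 := lam x1 y1).
  set (w := fun x y => v x y - l0 * u x y).
  assert (Hw : forall x y, D1 x y -> w x y = w x1 y1).
  { intros x y Hxy. apply (GD w x1 y1 rho); [|exact Hxy].
    intros x' y' H'. destruct (F1 x' y' H') as [G1 G2]. rewrite (Hlam x' y' H') in G1, G2. fold l0 in G1, G2.
    split.
    - apply (D_eq _ _ (px v x' y' - (0 * u x' y' + l0 * px u x' y'))); [| rewrite G1; ring].
      apply D_minus. exact (C1_dx v Cv x' y').
      exact (D_mult (fun _ => l0) (fun t => u t y') x' 0 _ (D_const l0 x') (C1_dx u Cu x' y')).
    - apply (D_eq _ _ (py v x' y' - (0 * u x' y' + l0 * py u x' y'))); [| rewrite G2; ring].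
      apply D_minus. exact (C1_dy v Cv x' y').
      exact (D_mult (fun _ => l0) (fun t => u x' t) y' 0 _ (D_const l0 y') (C1_dy u Cu x' y')). }
  exists l0, (w x1 y1), x1, y1, rho. split; [exact Hrho|].
  intros x y Hxy. unfold lin. rewrite <- (Hw x y Hxy). unfold w. ring.
Qed.

Lemma f_eta (f : C -> C) z : f z = (ure f (fst z) (snd z), vim f (fst z) (snd z)).
Proof. destruct z as [x y]. unfold ure, vim, Re, Im. simpl. destruct (f (x, y)); reflexivity. Qed.

Lemma px_const g c : (forall x y, g x y = c) -> forall x y, px g x y = 0.
Proof. intros H x y. unfold px. rewrite (Derive_ext _ (fun _ => c)) by (intros; apply H). apply Derive_const. Qed.
Lemma py_const g c : (forall x y, g x y = c) -> forall x y, py g x y = 0.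
Proof. intros H x y. unfold py. rewrite (Derive_ext _ (fun _ => c)) by (intros; apply H). apply Derive_const. Qed.

Lemma px_aff v u l c : C1 u -> (forall x y, v x y = l * u x y + c) -> forall x y, px v x y = l * px u x y.
Proof.
  intros Hu H x y. unfold px at 1. rewrite (Derive_ext _ (fun t => l * u t y + c)) by (intros; apply H).
  apply is_derive_unique. apply (D_eq _ _ (0 * u x y + l * px u x y + 0)); [|ring].
  apply D_plus. exact (D_mult (fun _ => l) (fun t => u t y) x 0 _ (D_const l x) (C1_dx u Hu x y)). apply D_const.
Qed.
Lemma py_aff v u l c : C1 u -> (forall x y, v x y = l * u x y + c) -> forall x y, py v x y = l * py u x y.
Proof.
  intros Hu H x y. unfold py at 1. rewrite (Derive_ext _ (fun t => l * u x t + c)) by (intros; apply H).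
  apply is_derive_unique. apply (D_eq _ _ (0 * u x y + l * py u x y + 0)); [|ring].
  apply D_plus. exact (D_mult (fun _ => l) (fun t => u x t) y 0 _ (D_const l y) (C1_dy u Hu x y)). apply D_const.
Qed.

Lemma point_val (f : C -> C) c0 : (forall z, f z = c0) -> Val_infinite f c0.
Proof.
  intros Hf [l Hl]. destruct (avoid (map fst l) 0 1 Rlt_0_1) as [x [_ Hx]].
  apply Hx. apply (in_map fst l (x, 0)). apply Hl. apply Hf.
Qed.

Lemma ls_val (f : C -> C) (g : R -> R -> R) w1 w0 :
  (forall l : list (R * R), exists x y, g x y = w1 /\ ~ In (x, y) l) ->
  (forall x y, g x y = w1 -> f (x, y) = w0) -> Val_infinite f w0.
Proof.
  intros Hg Hf [l Hl]. destruct (Hg l) as [x [y [E Hn]]]. apply Hn. apply Hl. apply Hf. exact E.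
Qed.

Lemma sqrt_lt_r X r : 0 < r -> X < r ^ 2 -> sqrt X < r.
Proof.
  intros Hr HX. destruct (Rle_dec 0 X) as [H0|H0].
  - assert (E := sqrt_sqrt X H0). assert (P := sqrt_pos X).
    apply Rnot_le_lt. intro Hc. nra.
  - rewrite (sqrt_neg_0 X) by lra. exact Hr.
Qed.

Lemma nonconst (g : R -> R -> R) : ~ (forall x y, g x y = g 0 0) -> exists p q, g p q <> g 0 0.
Proof.
  intros N. apply NNPP. intro N2. apply N. intros x y. apply NNPP. intro N3. apply N2. exists x, y. exact N3.
Qed.

Theorem lemma5p1 (f : C -> C) :
  harmonic f -> interior_S_nonempty f ->
  (image_is_point f \/ image_is_line f) /\
  (forall z : C, inS f z) /\
  (exists w0 : C, Val_infinite f w0).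
Proof.
  intros [Hu Hv] [z0 [r [Hr Hin]]].
  assert (Cu := harm_C1 _ Hu). assert (Cv := harm_C1 _ Hv).
  assert (HJ : forall x y, (x - fst z0) ^ 2 + (y - snd z0) ^ 2 < r ^ 2 ->
     px (ure f) x y * py (vim f) x y - py (ure f) x y * px (vim f) x y = 0).
  { intros x y H. assert (Hz := Hin (x, y)). unfold inS, jac in Hz. apply Hz.
    unfold Cmod, Cminus, Cplus, Copp. simpl fst; simpl snd. apply sqrt_lt_r; [exact Hr|].
    replace (x + - fst z0) with (x - fst z0) by ring. replace (y + - snd z0) with (y - snd z0) by ring. exact H. }
  destruct (local_lin (ure f) (vim f) Hu Hv (fst z0) (snd z0) r Hr HJ) as
    [[c [a' [b' [rho [Hrho Hd]]]]] | [l [c [a' [b' [rho [Hrho Hd]]]]]]].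
  -
    assert (Uc : forall x y, ure f x y = c).
    { intros x y. assert (E := UC (lin (ure f) (ure f) 0 c) a' b' rho (harm_lin _ _ 0 c Hu Hu) Hrho Hd x y).
      unfold lin in E. lra. }
    assert (HS : forall z, inS f z).
    { intros z. unfold inS, jac. rewrite (px_const _ c Uc), (py_const _ c Uc). ring. }
    destruct (classic (forall x y, vim f x y = vim f 0 0)) as [Vc|Vnc].
    + assert (Hf : forall z, f z = (c, vim f 0 0)).
      { intros z. rewrite f_eta, Uc, Vc. reflexivity. }
      split; [left; exists (c, vim f 0 0); exact Hf|]. split; [exact HS|].
      exists (c, vim f 0 0). apply point_val. exact Hf.
    + assert (NC := nonconst _ Vnc).
      split; [right|split; [exact HS|]].
      * exists (c, 0), (0, 1). split.
        { intros E. injection E. lra. }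
        intros w. split.
        -- intros [z Hz]. exists (vim f (fst z) (snd z)). rewrite <- Hz, f_eta, Uc.
           unfold Cplus, Cmult, RtoC. simpl. apply injective_projections; simpl; ring.
        -- intros [t Ht]. destruct (SJ _ Hv NC t) as [p [q Hpq]]. exists (p, q).
           rewrite f_eta, Ht. simpl fst; simpl snd. rewrite Uc, Hpq.
           unfold Cplus, Cmult, RtoC. apply injective_projections; simpl; ring.
      * destruct (LS_main _ Cv NC) as [w1 Hw1]. exists (c, w1).
        apply (ls_val f (vim f) w1). exact Hw1.
        intros x y E. rewrite f_eta. simpl fst; simpl snd. rewrite Uc, E. reflexivity.
  -
    assert (Va : forall x y, vim f x y = l * ure f x y + c).
    { intros x y. assert (E := UC (lin (vim f) (ure f) l c) a' b' rho (harm_lin _ _ l c Hv Hu) Hrho Hd x y).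
      unfold lin in E. lra. }
    assert (HS : forall z, inS f z).
    { intros z. unfold inS, jac. rewrite (px_aff _ _ l c Cu Va), (py_aff _ _ l c Cu Va). ring. }
    destruct (classic (forall x y, ure f x y = ure f 0 0)) as [Uc|Unc].
    + assert (Hf : forall z, f z = (ure f 0 0, l * ure f 0 0 + c)).
      { intros z. rewrite f_eta, Va, !Uc. reflexivity. }
      split; [left; eexists; exact Hf|]. split; [exact HS|].
      eexists. apply point_val. exact Hf.
    + assert (NC := nonconst _ Unc).
      split; [right|split; [exact HS|]].
      * exists (0, c), (1, l). split.
        { intros E. injection E. lra. }
        intros w. split.
        -- intros [z Hz]. exists (ure f (fst z) (snd z)). rewrite <- Hz, f_eta, Va.
           unfold Cplus, Cmult, RtoC. apply injective_projections; simpl; ring.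
        -- intros [t Ht]. destruct (SJ _ Hu NC t) as [p [q Hpq]]. exists (p, q).
           rewrite f_eta, Ht. simpl fst; simpl snd. rewrite Va, Hpq.
           unfold Cplus, Cmult, RtoC. apply injective_projections; simpl; ring.
      * destruct (LS_main _ Cu NC) as [w1 Hw1]. exists (w1, l * w1 + c).
        apply (ls_val f (ure f) w1). exact Hw1.
        intros x y E. rewrite f_eta. simpl fst; simpl snd. rewrite Va, E. reflexivity.
Qed.
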